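(* If a formula $A$ is derivable in the axiom system of $\mathbb{PCL}$ or of one of its extensions $\mathbb{PS}$ ($S$ a string among N, T, W, C, U, NU, TU, WU, CU, A, NA, TA, WA, CA), then for any world label $x$ the sequent $\Rightarrow x:A$ is derivable in the corresponding calculus $\mathsf{CL}$, respectively $\mathsf{CL}^S$.
   Context: Formulas $\mathcal{L}::=p\mid\bot\mid A\wedge B\mid A\lor B\mid A\to B\mid A>B$, $\neg A:=A\to\bot$, $\top:=\neg\bot$. Axiom systems: $\mathbb{PCL}$ = classical propositional logic + (RCEA) from $A\leftrightarrow B$ infer $(A>C)\leftrightarrow(B>C)$; (RCK) from $A\to B$ infer $(C>A)\to(C>B)$; (ID) $A>A$; (R-And) $(A>B)\wedge(A>C)\to(A>(B\wedge C))$; (CM) $(A>B)\wedge(A>C)\to((A\wedge B)>C)$; (OR) $(A>C)\wedge(B>C)\to((A\lor B)>C)$. (N) $\neg(\top>\bot)$; (T) $A\to\neg(A>\bot)$; (W) $(A>B)\to(A\to B)$; (C) $(A\wedge B)\to(A>B)$; (U$_1$) $(\neg A>\bot)\to(\neg(\neg A>\bot)>\bot)$; (U$_2$) $\neg(A>\bot)\to((A>\bot)>\bot)$; (A$_1$) $(A>B)\to(C>(A>B))$; (A$_2$) $\neg(A>B)\to(C>\neg(A>B))$. $\mathbb{PN}=\mathbb{PCL}+$(N), $\mathbb{PT}=\mathbb{PN}+$(T), $\mathbb{PW}=\mathbb{PT}+$(W), $\mathbb{PC}=\mathbb{PW}+$(C); $\mathbb{PU}=\mathbb{PCL}+$(U$_1$),(U$_2$),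 $\mathbb{PNU},\dots,\mathbb{PCU}$ add (N); (N),(T); etc. to $\mathbb{PU}$; $\mathbb{PA}=\mathbb{PCL}+$(A$_1$),(A$_2$), $\mathbb{PNA},\dots,\mathbb{PCA}$ analogously. Sequent calculi: world labels $x,y,\dots$; neighbourhood labels $a,b,\dots$ incl. $\{x\}$. Relational atoms $a\in N(x)$, $x\in a$, $a\subseteq b$; labelled formulas: these, $x:A$, $a\Vdash^\exists A$, $a\Vdash^\forall A$, $x\Vdash_aA|B$. Sequents: multisets, relational atoms only on the left. Rules of $\mathsf{CL}$ (premisses / conclusion; ''(u!)'': $u$ fresh): initial $x:p,\Gamma\Rightarrow\Delta,x:p$ ($p$ atomic), $x:\bot,\Gamma\Rightarrow\Delta$; G3 rules for $\wedge,\vee,\to$; L$\forall$: $x:A,x\in a,a\Vdash^\forall A,\Gamma\Rightarrow\Delta$ / $x\in a,a\Vdash^\forall A,\Gamma\Rightarrow\Delta$; R$\forall$(x!): $x\in a,\Gamma\Rightarrow\Delta,x:A$ / $\Gamma\Rightarrow\Delta,a\Vdash^\forall A$; L$\exists$(x!): $x\in a,x:A,\Gamma\Rightarrow\Delta$ / $a\Vdash^\exists A,\Gamma\Rightarrow\Delta$; R$\exists$: $x\in a,\Gamma\Rightarrow\Delta,x:A,a\Vdash^\exists A$ / $x\in a,\Gamma\Rightarrow\Delta,a\Vdash^\exists A$; R$>$(a!): $a\in N(x),a\Vdash^\exists A,\Gamma\Rightarrow\Delta,x\Vdash_aA|B$ / $\Gamma\Rightarrow\Delta,x:A>B$; L$>$: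 $a\in N(x),x:A>B,\Gamma\Rightarrow\Delta,a\Vdash^\exists A$ and $x\Vdash_aA|B,a\in N(x),x:A>B,\Gamma\Rightarrow\Delta$ / $a\in N(x),x:A>B,\Gamma\Rightarrow\Delta$; R$|$: $c\in N(x),c\subseteq a,\Gamma\Rightarrow\Delta,x\Vdash_aA|B,c\Vdash^\exists A$ and $c\in N(x),c\subseteq a,\Gamma\Rightarrow\Delta,x\Vdash_aA|B,c\Vdash^\forall A\to B$ / $c\in N(x),c\subseteq a,\Gamma\Rightarrow\Delta,x\Vdash_aA|B$; L$|$(c!): $c\in N(x),c\subseteq a,c\Vdash^\exists A,c\Vdash^\forall A\to B,\Gamma\Rightarrow\Delta$ / $x\Vdash_aA|B,\Gamma\Rightarrow\Delta$; Ref: $a\subseteq a,\Gamma\Rightarrow\Delta$ / $\Gamma\Rightarrow\Delta$; Tr: $c\subseteq a,c\subseteq b,b\subseteq a,\Gamma\Rightarrow\Delta$ / $c\subseteq b,b\subseteq a,\Gamma\Rightarrow\Delta$; L$\subseteq$: $x\in a,a\subseteq b,x\in b,\Gamma\Rightarrow\Delta$ / $x\in a,a\subseteq b,\Gamma\Rightarrow\Delta$. Extension rules: N(a!): $a\in N(x),\Gamma\Rightarrow\Delta$ / $\Gamma\Rightarrow\Delta$; 0(y!): $y\in a,a\in N(x),\Gamma\Rightarrow\Delta$ / $a\in N(x),\Gamma\Rightarrow\Delta$; T(a!): $x\in a,a\in N(x),\Gamma\Rightarrow\Delta$ / $\Gamma\Rightarrow\Delta$; W: $x\in a,a\in N(x),\Gamma\Rightarrow\Delta$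 / $a\in N(x),\Gamma\Rightarrow\Delta$; Single: $x\in\{x\},\{x\}\in N(x),\Gamma\Rightarrow\Delta$ / $\{x\}\in N(x),\Gamma\Rightarrow\Delta$; C: $\{x\}\in N(x),\{x\}\subseteq a,a\in N(x),\Gamma\Rightarrow\Delta$ / $a\in N(x),\Gamma\Rightarrow\Delta$; Repl$_1$: $y\in\{x\},At(x),At(y),\Gamma\Rightarrow\Delta$ / $y\in\{x\},At(x),\Gamma\Rightarrow\Delta$; Repl$_2$: same premiss / $y\in\{x\},At(y),\Gamma\Rightarrow\Delta$ ($At(x)$ among $x:P$, $P$ atomic, $x\in a$, $a\in N(x)$, $x\in\{z\}$); U$_1$(c!): $z\in c,c\in N(x),a\in N(x),y\in a,b\in N(y),z\in b,\Gamma\Rightarrow\Delta$ / $a\in N(x),y\in a,b\in N(y),z\in b,\Gamma\Rightarrow\Delta$; U$_2$(c!): $z\in c,c\in N(y),a\in N(x),y\in a,b\in N(x),z\in b,\Gamma\Rightarrow\Delta$ / $a\in N(x),y\in a,b\in N(x),z\in b,\Gamma\Rightarrow\Delta$; A$_1$: $b\in N(y),a\in N(x),y\in a,b\in N(x),\Gamma\Rightarrow\Delta$ / $a\in N(x),y\in a,b\in N(x),\Gamma\Rightarrow\Delta$; A$_2$: $b\in N(x),a\in N(x),y\in a,b\in N(y),\Gamma\Rightarrow\Delta$ / $a\in N(x),y\in a,b\in N(y),\Gamma\Rightarrow\Delta$; plus contracted instances of U$_1$,U$_2$,A$_1$. Calculi: $\mathsf{CL}^N=\mathsf{CL}+$N,0;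 $\mathsf{CL}^T=\mathsf{CL}^N+$T; $\mathsf{CL}^W=\mathsf{CL}^T+$W; $\mathsf{CL}^C=\mathsf{CL}^W+$C,Single,Repl$_1$,Repl$_2$; $\mathsf{CL}^U=\mathsf{CL}+$U$_1$,U$_2$; $\mathsf{CL}^{NU},\dots,\mathsf{CL}^{CU}$ = $\mathsf{CL}^N,\dots,\mathsf{CL}^C$ + U$_1$,U$_2$; $\mathsf{CL}^A=\mathsf{CL}+$A$_1$,A$_2$; $\mathsf{CL}^{NA},\dots,\mathsf{CL}^{CA}$ = $\mathsf{CL}^N,\dots,\mathsf{CL}^C$ + A$_1$,A$_2$. *)

(* Defs.v *)
From Stdlib Require Import List Permutation Bool.
Import ListNotations.

Inductive form : Type :=
| Var  : nat -> form
| Bot  : form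
| And  : form -> form -> form
| Or   : form -> form -> form
| Imp  : form -> form -> form
| Cond : form -> form -> form.

Definition Neg (A : form) : form := Imp A Bot.
Definition Top : form := Neg Bot.
Definition Iff (A B : form) : form := And (Imp A B) (Imp B A).

(** Classical propositional tautologies: formulas true under every boolean
    valuation, where propositional variables and conditional formulas A>B are
    treated as atoms (i.e. substitution instances of classical tautologies). *)
Fixpoint beval (v : form -> bool) (A : form) : bool :=
  match A with
  | Var _ => v A
  | Bot => false
  | And B C => beval v B && beval v C
  | Or B C => beval v B || beval v C
  | Imp B C => implb (beval v B) (beval v C)
  | Cond _ _ => v A
  end.

Definition tautology (A : form) : Prop := forall v : form -> bool, beval v A = true.

(** * The 15 systems: a "level" (none, N, T, W, C) and a "modal extension"
    (none, U, A). E.g. (LW, MU) is PWU / CL^{WU}, (L0, M0) is PCL / CL. *)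
Inductive level : Type := L0 | LN | LT | LW | LC.
Inductive modext : Type := M0 | MU | MA.

Definition lev_rank (l : level) : nat :=
  match l with L0 => 0 | LN => 1 | LT => 2 | LW => 3 | LC => 4 end.

Definition hasN (l : level) : Prop := 1 <= lev_rank l.
Definition hasT (l : level) : Prop := 2 <= lev_rank l.
Definition hasW (l : level) : Prop := 3 <= lev_rank l.
Definition hasC (l : level) : Prop := 4 <= lev_rank l.

Inductive hilbert (l : level) (m : modext) : form -> Prop :=
| H_taut : forall A, tautology A -> hilbert l m A
| H_mp : forall A B, hilbert l m (Imp A B) -> hilbert l m A -> hilbert l m B
| H_RCEA : forall A B C, hilbert l m (Iff A B) ->
    hilbert l m (Iff (Cond A C) (Cond B C))
| H_RCK : forall A B C, hilbert l m (Imp A B) ->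
    hilbert l m (Imp (Cond C A) (Cond C B))
| H_ID : forall A, hilbert l m (Cond A A)
| H_RAnd : forall A B C,
    hilbert l m (Imp (And (Cond A B) (Cond A C)) (Cond A (And B C)))
| H_CM : forall A B C,
    hilbert l m (Imp (And (Cond A B) (Cond A C)) (Cond (And A B) C))
| H_OR : forall A B C,
    hilbert l m (Imp (And (Cond A C) (Cond B C)) (Cond (Or A B) C))
| H_N : hasN l -> hilbert l m (Neg (Cond Top Bot))
| H_T : forall A, hasT l -> hilbert l m (Imp A (Neg (Cond A Bot)))
| H_W : forall A B, hasW l -> hilbert l m (Imp (Cond A B) (Imp A B))
| H_C : forall A B, hasC l -> hilbert l m (Imp (And A B) (Cond A B))
| H_U1 : forall A, m = MU ->
    hilbert l m (Imp (Cond (Neg A) Bot) (Cond (Neg (Cond (Neg A) Bot)) Bot))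
| H_U2 : forall A, m = MU ->
    hilbert l m (Imp (Neg (Cond A Bot)) (Cond (Cond A Bot) Bot))
| H_A1 : forall A B C, m = MA ->
    hilbert l m (Imp (Cond A B) (Cond C (Cond A B)))
| H_A2 : forall A B C, m = MA ->
    hilbert l m (Imp (Neg (Cond A B)) (Cond C (Neg (Cond A B)))).

Definition wlab := nat.
Inductive nlab : Type :=
| NV : nat -> nlab                            (* neighbourhood labels a, b, ... *)
| NS : wlab -> nlab.                          (* the label {x} *)

Inductive lform : Type :=
| InN  : nlab -> wlab -> lform                (* a ∈ N(x) *)
| InW  : wlab -> nlab -> lform                (* x ∈ a *)
| Sub  : nlab -> nlab -> lform                (* a ⊆ b *)
| LF   : wlab -> form -> lform                (* x : A *)
| Ex   : nlab -> form -> lform                (* a ⊩∃ A *)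
| All  : nlab -> form -> lform                (* a ⊩∀ A *)
| Cnd  : wlab -> nlab -> form -> form -> lform. (* x ⊩_a A | B *)

Definition nlab_has_w (x : wlab) (a : nlab) : Prop :=
  match a with NV _ => False | NS y => x = y end.

Definition occ_w (x : wlab) (F : lform) : Prop :=
  match F with
  | InN a y => nlab_has_w x a \/ x = y
  | InW y a => x = y \/ nlab_has_w x a
  | Sub a b => nlab_has_w x a \/ nlab_has_w x b
  | LF y _ => x = y
  | Ex a _ => nlab_has_w x a
  | All a _ => nlab_has_w x a
  | Cnd y a _ _ => x = y \/ nlab_has_w x a
  end.

Definition occ_n (n : nat) (F : lform) : Prop :=
  match F with
  | InN a _ => a = NV n
  | InW _ a => a = NV n
  | Sub a b => a = NV n \/ b = NV n
  | LF _ _ => False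
  | Ex a _ => a = NV n
  | All a _ => a = NV n
  | Cnd _ a _ _ => a = NV n
  end.

Definition fresh_w (x : wlab) (L : list lform) : Prop :=
  forall F, In F L -> ~ occ_w x F.
Definition fresh_n (n : nat) (L : list lform) : Prop :=
  forall F, In F L -> ~ occ_n n F.

(** templates At(_) for the Repl rules: x:P (P atomic), x ∈ a, a ∈ N(x), x ∈ {z} *)
Inductive atomT : Type :=
| AProp : nat -> atomT
| AIn   : nlab -> atomT
| AN    : nlab -> atomT
| ASing : wlab -> atomT.

Definition instAt (t : atomT) (x : wlab) : lform :=
  match t with
  | AProp p => LF x (Var p)
  | AIn a => InW x a
  | AN a => InN a x
  | ASing z => InW x (NS z)
  end.

(** * Labelled sequent calculi CL, CL^N, ..., CL^{CA}.
    Sequents Γ ⇒ Δ are pairs of lists considered up to permutation (multisets),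
    via the rule [S_perm]. *)
Inductive seqder (l : level) (m : modext) : list lform -> list lform -> Prop :=
| S_perm : forall G D G' D', seqder l m G D ->
    Permutation G G' -> Permutation D D' -> seqder l m G' D'
| S_init : forall x p G D,
    seqder l m (LF x (Var p) :: G) (LF x (Var p) :: D)
| S_botL : forall x G D, seqder l m (LF x Bot :: G) D
| S_andL : forall x A B G D, seqder l m (LF x A :: LF x B :: G) D ->
    seqder l m (LF x (And A B) :: G) D
| S_andR : forall x A B G D, seqder l m G (LF x A :: D) -> seqder l m G (LF x B :: D) ->
    seqder l m G (LF x (And A B) :: D)
| S_orL : forall x A B G D, seqder l m (LF x A :: G) D -> seqder l m (LF x B :: G) D ->
    seqder l m (LF x (Or A B) :: G) D
| S_orR : forall x A B G D, seqder l m G (LF x A :: LF x B :: D) ->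
    seqder l m G (LF x (Or A B) :: D)
| S_impL : forall x A B G D, seqder l m G (LF x A :: D) -> seqder l m (LF x B :: G) D ->
    seqder l m (LF x (Imp A B) :: G) D
| S_impR : forall x A B G D, seqder l m (LF x A :: G) (LF x B :: D) ->
    seqder l m G (LF x (Imp A B) :: D)
| S_LAll : forall x a A G D,
    seqder l m (LF x A :: InW x a :: All a A :: G) D ->
    seqder l m (InW x a :: All a A :: G) D
| S_RAll : forall x a A G D,
    fresh_w x (G ++ All a A :: D) ->
    seqder l m (InW x a :: G) (LF x A :: D) ->
    seqder l m G (All a A :: D)
| S_LEx : forall x a A G D,
    fresh_w x (Ex a A :: G ++ D) ->
    seqder l m (InW x a :: LF x A :: G) D ->
    seqder l m (Ex a A :: G) D
| S_REx : forall x a A G D,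
    seqder l m (InW x a :: G) (LF x A :: Ex a A :: D) ->
    seqder l m (InW x a :: G) (Ex a A :: D)
| S_RCond : forall n x A B G D,
    fresh_n n (G ++ LF x (Cond A B) :: D) ->
    seqder l m (InN (NV n) x :: Ex (NV n) A :: G) (Cnd x (NV n) A B :: D) ->
    seqder l m G (LF x (Cond A B) :: D)
| S_LCond : forall a x A B G D,
    seqder l m (InN a x :: LF x (Cond A B) :: G) (Ex a A :: D) ->
    seqder l m (Cnd x a A B :: InN a x :: LF x (Cond A B) :: G) D ->
    seqder l m (InN a x :: LF x (Cond A B) :: G) D
| S_RBar : forall c a x A B G D,
    seqder l m (InN c x :: Sub c a :: G) (Cnd x a A B :: Ex c A :: D) ->
    seqder l m (InN c x :: Sub c a :: G) (Cnd x a A B :: All c (Imp A B) :: D) ->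
    seqder l m (InN c x :: Sub c a :: G) (Cnd x a A B :: D)
| S_LBar : forall n a x A B G D,
    fresh_n n (Cnd x a A B :: G ++ D) ->
    seqder l m (InN (NV n) x :: Sub (NV n) a :: Ex (NV n) A :: All (NV n) (Imp A B) :: G) D ->
    seqder l m (Cnd x a A B :: G) D
| S_Ref : forall a G D, seqder l m (Sub a a :: G) D -> seqder l m G D
| S_Tr : forall a b c G D,
    seqder l m (Sub c a :: Sub c b :: Sub b a :: G) D ->
    seqder l m (Sub c b :: Sub b a :: G) D
| S_LSub : forall x a b G D,
    seqder l m (InW x a :: Sub a b :: InW x b :: G) D ->
    seqder l m (InW x a :: Sub a b :: G) D
| S_N : forall n x G D, hasN l -> fresh_n n (G ++ D) ->
    seqder l m (InN (NV n) x :: G) D -> seqder l m G D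
| S_0 : forall y a x G D, hasN l -> fresh_w y (InN a x :: G ++ D) ->
    seqder l m (InW y a :: InN a x :: G) D -> seqder l m (InN a x :: G) D
| S_T : forall n x G D, hasT l -> fresh_n n (G ++ D) ->
    seqder l m (InW x (NV n) :: InN (NV n) x :: G) D -> seqder l m G D
| S_W : forall a x G D, hasW l ->
    seqder l m (InW x a :: InN a x :: G) D -> seqder l m (InN a x :: G) D
| S_Single : forall x G D, hasC l ->
    seqder l m (InW x (NS x) :: InN (NS x) x :: G) D ->
    seqder l m (InN (NS x) x :: G) D
| S_C : forall a x G D, hasC l ->
    seqder l m (InN (NS x) x :: Sub (NS x) a :: InN a x :: G) D ->
    seqder l m (InN a x :: G) D
| S_Repl1 : forall t x y G D, hasC l ->
    seqder l m (InW y (NS x) :: instAt t x :: instAt t y :: G) D ->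
    seqder l m (InW y (NS x) :: instAt t x :: G) D
| S_Repl2 : forall t x y G D, hasC l ->
    seqder l m (InW y (NS x) :: instAt t x :: instAt t y :: G) D ->
    seqder l m (InW y (NS x) :: instAt t y :: G) D
(* U1, U2, A1 together with their contracted instances: the principal atoms
   need only occur in Γ (membership), so coinciding principal atoms may be
   contracted; the premiss repeats the conclusion. *)
| S_U1 : forall n a b x y z G D, m = MU ->
    incl [InN a x; InW y a; InN b y; InW z b] G ->
    fresh_n n (G ++ D) ->
    seqder l m (InW z (NV n) :: InN (NV n) x :: G) D -> seqder l m G D
| S_U2 : forall n a b x y z G D, m = MU ->
    incl [InN a x; InW y a; InN b x; InW z b] G ->
    fresh_n n (G ++ D) ->
    seqder l m (InW z (NV n) :: InN (NV n) y :: G) D -> seqder l m G D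
| S_A1 : forall a b x y G D, m = MA ->
    incl [InN a x; InW y a; InN b x] G ->
    seqder l m (InN b y :: G) D -> seqder l m G D
| S_A2 : forall a b x y G D, m = MA ->
    seqder l m (InN b x :: InN a x :: InW y a :: InN b y :: G) D ->
    seqder l m (InN a x :: InW y a :: InN b y :: G) D.

(* Main.v *)
Require Import Defs.
From Stdlib Require Import List Permutation Bool Arith Lia.
Import ListNotations.
Set Warnings "-intuition-auto-with-star".

Definition form_eq_dec : forall A B : form, {A = B} + {A <> B}.
Proof. decide equality; apply Nat.eq_dec. Defined.
Definition nlab_eq_dec : forall a b : nlab, {a = b} + {a <> b}.
Proof. decide equality; apply Nat.eq_dec. Defined.
Definition lform_eq_dec : forall F G : lform, {F = G} + {F <> G}.
Proof. decide equality; try apply form_eq_dec; try apply nlab_eq_dec; apply Nat.eq_dec. Defined.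

Lemma cnt_cons a l x : count_occ lform_eq_dec (a :: l) x = (if lform_eq_dec a x then 1 else 0) + count_occ lform_eq_dec l x.
Proof. simpl. destruct (lform_eq_dec a x); reflexivity. Qed.
Lemma cnt_nil x : count_occ lform_eq_dec [] x = 0.
Proof. reflexivity. Qed.
Ltac perm :=
  apply (Permutation_count_occ lform_eq_dec); intro;
  rewrite ?map_app; cbn [map app];
  repeat progress (rewrite ?count_occ_app, ?cnt_cons, ?cnt_nil);
  repeat match goal with |- context [lform_eq_dec ?a ?b] => destruct (lform_eq_dec a b) end; lia.

Definition wlN (a : nlab) : list wlab := match a with NV _ => [] | NS y => [y] end.
Definition nlN (a : nlab) : list nat := match a with NV n => [n] | NS _ => [] end.
Definition wlF (F : lform) : list wlab :=
  match F with
  | InN a y => y :: wlN a | InW y a => y :: wlN a | Sub a b => wlN a ++ wlN b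
  | LF y _ => [y] | Ex a _ => wlN a | All a _ => wlN a | Cnd y a _ _ => y :: wlN a end.
Definition nlF (F : lform) : list nat :=
  match F with
  | InN a _ => nlN a | InW _ a => nlN a | Sub a b => nlN a ++ nlN b
  | LF _ _ => [] | Ex a _ => nlN a | All a _ => nlN a | Cnd _ a _ _ => nlN a end.
Definition wls (L : list lform) : list wlab := flat_map wlF L.
Definition nls (L : list lform) : list nat := flat_map nlF L.

Lemma wls_app L1 L2 : wls (L1 ++ L2) = wls L1 ++ wls L2.
Proof. apply flat_map_app. Qed.
Lemma nls_app L1 L2 : nls (L1 ++ L2) = nls L1 ++ nls L2.
Proof. apply flat_map_app. Qed.

Lemma in_wls x L : In x (wls L) <-> exists F, In F L /\ In x (wlF F).
Proof. unfold wls; rewrite in_flat_map; firstorder. Qed.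
Lemma in_nls x L : In x (nls L) <-> exists F, In F L /\ In x (nlF F).
Proof. unfold nls; rewrite in_flat_map; firstorder. Qed.

Lemma wls_incl x L1 L2 : incl L1 L2 -> In x (wls L1) -> In x (wls L2).
Proof. rewrite !in_wls; firstorder. Qed.
Lemma nls_incl x L1 L2 : incl L1 L2 -> In x (nls L1) -> In x (nls L2).
Proof. rewrite !in_nls; firstorder. Qed.

Definition freshW (L : list lform) : wlab := S (list_max (wls L)).
Definition freshN (L : list lform) : nat := S (list_max (nls L)).
Lemma list_max_in x l : In x l -> x <= list_max l.
Proof. intro H. pose proof (proj1 (list_max_le l (list_max l)) (le_n _)) as H2.
  rewrite Forall_forall in H2. auto. Qed.
Lemma freshW_gt L x : In x (wls L) -> x < freshW L.
Proof. intro H; unfold freshW; apply list_max_in in H; lia. Qed.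
Lemma freshN_gt L x : In x (nls L) -> x < freshN L.
Proof. intro H; unfold freshN; apply list_max_in in H; lia. Qed.
Lemma freshW_ok L L' : incl L' L -> ~ In (freshW L) (wls L').
Proof. intros Hi H. apply (wls_incl _ _ _ Hi) in H. apply freshW_gt in H; lia. Qed.
Lemma freshN_ok L L' : incl L' L -> ~ In (freshN L) (nls L').
Proof. intros Hi H. apply (nls_incl _ _ _ Hi) in H. apply freshN_gt in H; lia. Qed.

Fixpoint fs (A : form) : nat :=
  match A with
  | Var _ => 1 | Bot => 1
  | And A B => 1 + fs A + fs B | Or A B => 1 + fs A + fs B | Imp A B => 1 + fs A + fs B
  | Cond A B => 2 + fs A + fs B end.
Definition weight (F : lform) : nat :=
  match F with
  | InN _ _ => 0 | InW _ _ => 0 | Sub _ _ => 0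
  | LF _ A => 4 * fs A | Ex _ A => 4 * fs A + 1 | All _ A => 4 * fs A + 1
  | Cnd _ _ A B => 4 * (fs A + fs B + 1) + 2 end.

Definition isInvL (P : lform) : Prop :=
  match P with
  | LF _ (And _ _) | LF _ (Or _ _) | LF _ (Imp _ _) => True
  | Ex _ _ => True | Cnd _ _ _ _ => True | _ => False end.
Definition isInvR (P : lform) : Prop :=
  match P with
  | LF _ (And _ _) | LF _ (Or _ _) | LF _ (Imp _ _) | LF _ (Cond _ _) => True
  | All _ _ => True | _ => False end.

Definition compL (P : lform) (y : wlab) (k : nat) : list (list lform * list lform) :=
  match P with
  | LF x (And A B) => [([LF x A; LF x B], [])]
  | LF x (Or A B) => [([LF x A], []); ([LF x B], [])]
  | LF x (Imp A B) => [([], [LF x A]); ([LF x B], [])]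
  | Ex a A => [([InW y a; LF y A], [])]
  | Cnd x a A B => [([InN (NV k) x; Sub (NV k) a; Ex (NV k) A; All (NV k) (Imp A B)], [])]
  | _ => [] end.
Definition compR (P : lform) (y : wlab) (k : nat) : list (list lform * list lform) :=
  match P with
  | LF x (And A B) => [([], [LF x A]); ([], [LF x B])]
  | LF x (Or A B) => [([], [LF x A; LF x B])]
  | LF x (Imp A B) => [([LF x A], [LF x B])]
  | LF x (Cond A B) => [([InN (NV k) x; Ex (NV k) A], [Cnd x (NV k) A B])]
  | All a A => [([InW y a], [LF y A])]
  | _ => [] end.

Inductive rinst (l : level) (m : modext) : list lform -> list lform -> list lform -> list lform ->
   list (list lform * list lform) -> option wlab -> option nat -> Prop :=
| RI_init : forall x p, rinst l m [LF x (Var p)] [LF x (Var p)] [] [] [] None None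
| RI_bot : forall x, rinst l m [LF x Bot] [] [] [] [] None None
| RI_invL : forall P y k, isInvL P -> rinst l m [P] [] [] [] (compL P y k) (Some y) (Some k)
| RI_invR : forall P y k, isInvR P -> rinst l m [] [P] [] [] (compR P y k) (Some y) (Some k)
| RI_LAll : forall x a A, rinst l m [] [] [InW x a; All a A] [] [([LF x A], [])] None None
| RI_REx : forall x a A, rinst l m [] [] [InW x a] [Ex a A] [([], [LF x A])] None None
| RI_LCond : forall a x A B, rinst l m [] [] [InN a x; LF x (Cond A B)] []
     [([], [Ex a A]); ([Cnd x a A B], [])] None None
| RI_RBar : forall c a x A B, rinst l m [] [] [InN c x; Sub c a] [Cnd x a A B]
     [([], [Ex c A]); ([], [All c (Imp A B)])] None None
| RI_Ref : forall a, rinst l m [] [] [] [] [([Sub a a], [])] None None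
| RI_Tr : forall a b c, rinst l m [] [] [Sub c b; Sub b a] [] [([Sub c a], [])] None None
| RI_LSub : forall x a b, rinst l m [] [] [InW x a; Sub a b] [] [([InW x b], [])] None None
| RI_N : forall n x, hasN l -> rinst l m [] [] [] [] [([InN (NV n) x], [])] None (Some n)
| RI_0 : forall y a x, hasN l -> rinst l m [] [] [InN a x] [] [([InW y a], [])] (Some y) None
| RI_T : forall n x, hasT l -> rinst l m [] [] [] [] [([InW x (NV n); InN (NV n) x], [])] None (Some n)
| RI_W : forall a x, hasW l -> rinst l m [] [] [InN a x] [] [([InW x a], [])] None None
| RI_Single : forall x, hasC l -> rinst l m [] [] [InN (NS x) x] [] [([InW x (NS x)], [])] None None
| RI_C : forall a x, hasC l -> rinst l m [] [] [InN a x] [] [([InN (NS x) x; Sub (NS x) a], [])] None None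
| RI_Repl1 : forall t x y, hasC l -> rinst l m [] [] [InW y (NS x); instAt t x] [] [([instAt t y], [])] None None
| RI_Repl2 : forall t x y, hasC l -> InW y (NS x) <> instAt t y ->
     rinst l m [] [] [InW y (NS x); instAt t y] [] [([instAt t x], [])] None None
| RI_U1 : forall n a b x y z, m = MU ->
     rinst l m [] [] [InN a x; InW y a; InN b y; InW z b] [] [([InW z (NV n); InN (NV n) x], [])] None (Some n)
| RI_U2 : forall n a b x y z, m = MU ->
     rinst l m [] [] [InN a x; InW y a; InN b x; InW z b] [] [([InW z (NV n); InN (NV n) y], [])] None (Some n)
| RI_A1 : forall a b x y, m = MA ->
     rinst l m [] [] [InN a x; InW y a; InN b x] [] [([InN b y], [])] None None
| RI_A2 : forall a b x y, m = MA ->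
     rinst l m [] [] [InN a x; InW y a; InN b y] [] [([InN b x], [])] None None.

Inductive seqS (l : level) (m : modext) : list lform -> list lform -> Prop :=
| SS : forall Lc Rc NL NR Ps ew en G0 D0 G D,
    rinst l m Lc Rc NL NR Ps ew en ->
    Permutation G (Lc ++ G0) -> Permutation D (Rc ++ D0) ->
    incl NL G0 -> incl NR D0 ->
    (forall y, ew = Some y -> ~ In y (wls (G ++ D))) ->
    (forall n, en = Some n -> ~ In n (nls (G ++ D))) ->
    (forall Lp Rp, In (Lp, Rp) Ps -> seqS l m (Lp ++ G0) (Rp ++ D0)) ->
    seqS l m G D.

Lemma wls_perm L1 L2 x : Permutation L1 L2 -> In x (wls L1) -> In x (wls L2).
Proof. intros HP. apply wls_incl. intros z Hz. eapply Permutation_in; eauto. Qed.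
Lemma nls_perm L1 L2 x : Permutation L1 L2 -> In x (nls L1) -> In x (nls L2).
Proof. intros HP. apply nls_incl. intros z Hz. eapply Permutation_in; eauto. Qed.

Lemma seqS_perm l m G D G' D' : seqS l m G D -> Permutation G G' -> Permutation D D' -> seqS l m G' D'.
Proof.
  intros H HG HD. destruct H as [Lc Rc NL NR Ps ew en G0 D0 G D Hr HG0 HD0 HNL HNR Hew Hen Hp].
  econstructor; eauto.
  - eapply Permutation_trans; [apply Permutation_sym; eauto | eauto].
  - eapply Permutation_trans; [apply Permutation_sym; eauto | eauto].
  - intros y Hy Hin. apply (Hew y Hy). eapply wls_perm; [|eauto].
    apply Permutation_app; apply Permutation_sym; auto.
  - intros y Hy Hin. apply (Hen y Hy). eapply nls_perm; [|eauto].
    apply Permutation_app; apply Permutation_sym; auto.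
Qed.

Definition subN (sw : wlab -> wlab) (sn : nat -> nlab) (a : nlab) : nlab :=
  match a with NV n => sn n | NS y => NS (sw y) end.
Definition subF sw sn (F : lform) : lform :=
  match F with
  | InN a y => InN (subN sw sn a) (sw y)
  | InW y a => InW (sw y) (subN sw sn a)
  | Sub a b => Sub (subN sw sn a) (subN sw sn b)
  | LF y A => LF (sw y) A
  | Ex a A => Ex (subN sw sn a) A
  | All a A => All (subN sw sn a) A
  | Cnd y a A B => Cnd (sw y) (subN sw sn a) A B end.
Definition subT sw sn (t : atomT) : atomT :=
  match t with AProp p => AProp p | AIn a => AIn (subN sw sn a)
  | AN a => AN (subN sw sn a) | ASing z => ASing (sw z) end.
Lemma sub_instAt sw sn t x : subF sw sn (instAt t x) = instAt (subT sw sn t) (sw x).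
Proof. destruct t; reflexivity. Qed.
Definition subP sw sn (p : list lform * list lform) :=
  (map (subF sw sn) (fst p), map (subF sw sn) (snd p)).

Lemma subF_agree sw sn sw' sn' F :
  (forall y, In y (wlF F) -> sw y = sw' y) -> (forall n, In n (nlF F) -> sn n = sn' n) ->
  subF sw sn F = subF sw' sn' F.
Proof.
  intros Hw Hn. destruct F; simpl in *;
  repeat match goal with a : nlab |- _ => destruct a end; simpl in *;
  f_equal; try apply Hw; try apply Hn; simpl; auto with datatypes;
  try (f_equal; first [apply Hw | apply Hn]; simpl; auto with datatypes).
Qed.

Lemma map_agree sw sn sw' sn' L :
  (forall y, In y (wls L) -> sw y = sw' y) -> (forall n, In n (nls L) -> sn n = sn' n) ->
  map (subF sw sn) L = map (subF sw' sn') L.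
Proof.
  intros Hw Hn. apply map_ext_in. intros F HF. apply subF_agree.
  - intros y Hy; apply Hw; apply in_wls; eauto.
  - intros y Hy; apply Hn; apply in_nls; eauto.
Qed.

Lemma isInvL_sub sw sn P : isInvL P -> isInvL (subF sw sn P).
Proof. destruct P; simpl; auto. Qed.
Lemma isInvR_sub sw sn P : isInvR P -> isInvR (subF sw sn P).
Proof. destruct P; simpl; auto. Qed.

Lemma compL_sub sw sn P y k k' : sn k = NV k' ->
  map (subP sw sn) (compL P y k) = compL (subF sw sn P) (sw y) k'.
Proof. intro H. destruct P; try destruct f; unfold subP; simpl; try rewrite H; reflexivity. Qed.
Lemma compR_sub sw sn P y k k' : sn k = NV k' ->
  map (subP sw sn) (compR P y k) = compR (subF sw sn P) (sw y) k'.
Proof. intro H. destruct P; try destruct f; unfold subP; simpl; try rewrite H; reflexivity. Qed.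

Lemma hasC_N l : hasC l -> hasN l.
Proof. unfold hasC, hasN; lia. Qed.

Lemma rinst_sub l m Lc Rc NL NR Ps ew en sw sn z k :
  rinst l m Lc Rc NL NR Ps ew en ->
  (forall y, ew = Some y -> sw y = z) -> (forall n, en = Some n -> sn n = NV k) ->
  rinst l m (map (subF sw sn) Lc) (map (subF sw sn) Rc) (map (subF sw sn) NL) (map (subF sw sn) NR)
    (map (subP sw sn) Ps) (option_map (fun _ => z) ew) (option_map (fun _ => k) en)
  \/ (hasC l /\ Lc = [] /\ Rc = [] /\ NR = [] /\ ew = None /\ en = None /\
      exists x Lp, Ps = [(Lp, [])] /\ map (subF sw sn) Lp = [InW x (NS x)]).
Proof.
  intros H Hw Hn. destruct H; simpl;
  try (left; constructor; assumption).
  - left. rewrite (compL_sub _ _ _ _ _ k (Hn _ eq_refl)). rewrite <- (Hw _ eq_refl).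
    constructor. apply isInvL_sub; auto.
  - left. rewrite (compR_sub _ _ _ _ _ k (Hn _ eq_refl)). rewrite <- (Hw _ eq_refl).
    constructor. apply isInvR_sub; auto.
  - left. unfold subP; simpl. rewrite (Hn _ eq_refl). constructor; auto.
  - left. unfold subP; simpl. rewrite <- (Hw _ eq_refl). constructor; auto.
  - left. unfold subP; simpl. rewrite (Hn _ eq_refl). constructor; auto.
  - left. unfold subP; simpl. rewrite !sub_instAt. constructor; auto.
  - unfold subP; simpl. rewrite !sub_instAt.
    destruct (lform_eq_dec (InW (sw y) (NS (sw x))) (instAt (subT sw sn t) (sw y))) as [e|ne].
    + right. repeat split; auto. exists (sw x), [instAt t x]. split; auto. simpl.
      rewrite sub_instAt. destruct t; simpl in e; try discriminate; inversion e; simpl; congruence.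
    + left. constructor; auto.
  - left. unfold subP; simpl. rewrite (Hn _ eq_refl). constructor; auto.
  - left. unfold subP; simpl. rewrite (Hn _ eq_refl). constructor; auto.
Qed.

Lemma incl_map_app {A B} (f : A -> B) L1 L2 L3 : incl L1 L2 -> incl (map f L1) (map f L2 ++ L3).
Proof. intros H. apply incl_appl. apply incl_map. auto. Qed.

Theorem seqS_sub l m G D : seqS l m G D -> forall sw sn G' D',
  seqS l m (map (subF sw sn) G ++ G') (map (subF sw sn) D ++ D').
Proof.
  induction 1 as [Lc Rc NL NR Ps ew en G0 D0 G D Hr HG HD HNL HNR Hew Hen Hp IH].
  intros sw sn G' D'.
  set (NG := map (subF sw sn) G ++ G'). set (ND := map (subF sw sn) D ++ D').
  set (z := freshW (NG ++ ND)). set (k := freshN (NG ++ ND)).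
  set (sw' := match ew with Some y => fun v => if Nat.eq_dec v y then z else sw v | None => sw end).
  set (sn' := match en with Some n => fun v => if Nat.eq_dec v n then NV k else sn v | None => sn end).
  assert (Hag : forall L, incl L (G ++ D) -> map (subF sw sn) L = map (subF sw' sn') L).
  { intros L HL. apply map_agree.
    - intros y Hy. unfold sw'. destruct ew as [y0|]; auto. destruct (Nat.eq_dec y y0); auto.
      subst. exfalso. apply (Hew y0 eq_refl). eapply wls_incl; eauto.
    - intros y Hy. unfold sn'. destruct en as [y0|]; auto. destruct (Nat.eq_dec y y0); auto.
      subst. exfalso. apply (Hen y0 eq_refl). eapply nls_incl; eauto. }
  assert (HGe : map (subF sw sn) G = map (subF sw' sn') G) by (apply Hag; apply incl_appl, incl_refl).
  assert (HDe : map (subF sw sn) D = map (subF sw' sn') D) by (apply Hag; apply incl_appr, incl_refl).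
  destruct (rinst_sub _ _ _ _ _ _ _ _ _ sw' sn' z k Hr) as [Hr'|Hdeg].
  - intros y Hy; subst; unfold sw'; destruct (Nat.eq_dec y y); congruence.
  - intros y Hy; subst; unfold sn'; destruct (Nat.eq_dec y y); congruence.
  - eapply SS with (G0 := map (subF sw' sn') G0 ++ G') (D0 := map (subF sw' sn') D0 ++ D'); [exact Hr'|..].
    + unfold NG. rewrite HGe, app_assoc, <- map_app. apply Permutation_app_tail, Permutation_map; auto.
    + unfold ND. rewrite HDe, app_assoc, <- map_app. apply Permutation_app_tail, Permutation_map; auto.
    + apply incl_map_app; auto.
    + apply incl_map_app; auto.
    + intros y Hy. destruct ew; simpl in Hy; inversion Hy; subst. apply freshW_ok, incl_refl.
    + intros y Hy. destruct en; simpl in Hy; inversion Hy; subst. apply freshN_ok, incl_refl.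
    + intros Lp' Rp' Hin. apply in_map_iff in Hin. destruct Hin as [[Lp Rp] [He Hin]].
      unfold subP in He; simpl in He. inversion He; subst.
      specialize (IH Lp Rp Hin sw' sn' G' D'). rewrite !map_app, <- !app_assoc in IH. exact IH.
  - destruct Hdeg as (HC & -> & -> & -> & -> & -> & x & Lp & -> & HLp).
    assert (HGG : Permutation G G0) by exact HG.
    assert (HDD : Permutation D D0) by exact HD.
    clear Hag.
    set (n := freshN (NG ++ ND)).
    eapply SS with (G0 := NG) (D0 := ND); [apply (RI_N l m n x (hasC_N _ HC))|simpl; auto|simpl;auto|
       apply incl_nil_l|apply incl_nil_l|intros; discriminate|..].
    { intros n0 Hn0; inversion Hn0; subst. apply freshN_ok, incl_refl. }
    intros Lp0 Rp0 [He|[]]. inversion He; subst. simpl.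
    eapply SS with (G0 := InN (NV n) x :: NG) (D0 := ND); [apply (RI_C l m (NV n) x HC)|simpl;auto|simpl;auto|
      intros q [<-|[]]; left; auto|apply incl_nil_l|intros; discriminate|intros; discriminate|].
    intros Lp1 Rp1 [He1|[]]. inversion He1; subst. simpl.
    eapply SS with (G0 := [InN (NS x) x; Sub (NS x) (NV n); InN (NV n) x] ++ NG) (D0 := ND);
      [apply (RI_Single l m x HC)|simpl;auto|simpl;auto|
      intros q [<-|[]]; left; auto|apply incl_nil_l|intros; discriminate|intros; discriminate|].
    intros Lp2 Rp2 [He2|[]]. inversion He2; subst. simpl.
    specialize (IH Lp [] (or_introl eq_refl) sw sn ([InN (NS x) x; Sub (NS x) (NV n); InN (NV n) x] ++ G') D').
    unfold sw', sn' in HLp. rewrite map_app, HLp in IH. simpl in IH.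
    assert (HM: Permutation (map (subF sw sn) G0) (map (subF sw sn) G)) by (apply Permutation_map; symmetry; auto).
    assert (HM2: Permutation (map (subF sw sn) D0) (map (subF sw sn) D)) by (apply Permutation_map; symmetry; auto).
    eapply seqS_perm; [exact IH| |].
    + unfold NG. apply perm_skip. eapply Permutation_trans; [apply Permutation_app_tail, HM|]. perm.
    + unfold ND. apply Permutation_app_tail, HM2.
Qed.

Corollary seqS_weak l m G D G' D' : seqS l m G D -> seqS l m (G ++ G') (D ++ D').
Proof.
  intro H. pose proof (seqS_sub _ _ _ _ H id NV G' D') as H'.
  assert (E : forall L, map (subF id NV) L = L).
  { intro L. induction L as [|F L IHL]; simpl; auto. rewrite IHL. f_equal.
    destruct F; simpl; repeat match goal with a : nlab |- _ => destruct a end; reflexivity. }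
  rewrite !E in H'. exact H'.
Qed.

Lemma subF_id F : subF id NV F = F.
Proof. destruct F; simpl; repeat match goal with a : nlab |- _ => destruct a end; reflexivity. Qed.
Lemma map_subF_id L : map (subF id NV) L = L.
Proof. induction L; simpl; f_equal; auto using subF_id. Qed.

Definition ren (y0 y : wlab) (v : wlab) : wlab := if Nat.eq_dec v y0 then y else v.
Definition renN (k0 k : nat) (v : nat) : nlab := if Nat.eq_dec v k0 then NV k else NV v.

Lemma subF_ren_fix y0 y k0 k F : ~ In y0 (wlF F) -> ~ In k0 (nlF F) -> subF (ren y0 y) (renN k0 k) F = F.
Proof.
  intros H1 H2. rewrite <- (subF_id F) at 2. apply subF_agree.
  - intros v Hv. unfold ren. destruct (Nat.eq_dec v y0); subst; tauto.
  - intros v Hv. unfold renN. destruct (Nat.eq_dec v k0); subst; tauto.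
Qed.
Lemma map_ren_fix y0 y k0 k L : ~ In y0 (wls L) -> ~ In k0 (nls L) -> map (subF (ren y0 y) (renN k0 k)) L = L.
Proof.
  intros H1 H2. rewrite <- (map_subF_id L) at 2. apply map_agree.
  - intros v Hv. unfold ren. destruct (Nat.eq_dec v y0); subst; tauto.
  - intros v Hv. unfold renN. destruct (Nat.eq_dec v k0); subst; tauto.
Qed.

Lemma compL_ren P y0 k0 y k : ~ In y0 (wlF P) -> ~ In k0 (nlF P) ->
  map (subP (ren y0 y) (renN k0 k)) (compL P y0 k0) = compL P y k.
Proof.
  intros H1 H2. rewrite (compL_sub _ _ _ _ _ k).
  - rewrite subF_ren_fix; auto. unfold ren. destruct (Nat.eq_dec y0 y0); congruence.
  - unfold renN. destruct (Nat.eq_dec k0 k0); congruence.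
Qed.
Lemma compR_ren P y0 k0 y k : ~ In y0 (wlF P) -> ~ In k0 (nlF P) ->
  map (subP (ren y0 y) (renN k0 k)) (compR P y0 k0) = compR P y k.
Proof.
  intros H1 H2. rewrite (compR_sub _ _ _ _ _ k).
  - rewrite subF_ren_fix; auto. unfold ren. destruct (Nat.eq_dec y0 y0); congruence.
  - unfold renN. destruct (Nat.eq_dec k0 k0); congruence.
Qed.

Lemma seqS_rename l m y0 y k0 k L R G D :
  ~ In y0 (wls (G ++ D)) -> ~ In k0 (nls (G ++ D)) ->
  seqS l m (L ++ G) (R ++ D) ->
  seqS l m (map (subF (ren y0 y) (renN k0 k)) L ++ G) (map (subF (ren y0 y) (renN k0 k)) R ++ D).
Proof.
  intros H1 H2 H. pose proof (seqS_sub _ _ _ _ H (ren y0 y) (renN k0 k) [] []) as H0; clear H; rename H0 into H.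
  rewrite !app_nil_r, !map_app in H.
  rewrite wls_app in H1. rewrite nls_app in H2.
  rewrite (map_ren_fix _ _ _ _ G), (map_ren_fix _ _ _ _ D) in H; [exact H|..];
  intro; solve [apply H1; auto with datatypes | apply H2; auto with datatypes].
Qed.

Lemma compL_wl P y k L R w : In (L, R) (compL P y k) -> In w (wls (L ++ R)) -> In w (wlF P) \/ w = y.
Proof.
  intros H Hw. destruct P; try destruct f; simpl in H; try contradiction;
  repeat destruct H as [H|H]; try contradiction; inversion H; subst; clear H;
  unfold wls in Hw; simpl in Hw; rewrite ?app_nil_r in Hw; simpl;
  repeat match goal with a : nlab |- _ => destruct a end; simpl in *; intuition.
Qed.
Lemma compL_nl P y k L R w : In (L, R) (compL P y k) -> In w (nls (L ++ R)) -> In w (nlF P) \/ w = k.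
Proof.
  intros H Hw. destruct P; try destruct f; simpl in H; try contradiction;
  repeat destruct H as [H|H]; try contradiction; inversion H; subst; clear H;
  unfold nls in Hw; simpl in Hw; rewrite ?app_nil_r in Hw; simpl;
  repeat match goal with a : nlab |- _ => destruct a end; simpl in *; intuition.
Qed.
Lemma compR_wl P y k L R w : In (L, R) (compR P y k) -> In w (wls (L ++ R)) -> In w (wlF P) \/ w = y.
Proof.
  intros H Hw. destruct P; try destruct f; simpl in H; try contradiction;
  repeat destruct H as [H|H]; try contradiction; inversion H; subst; clear H;
  unfold wls in Hw; simpl in Hw; rewrite ?app_nil_r in Hw; simpl;
  repeat match goal with a : nlab |- _ => destruct a end; simpl in *; intuition.
Qed.
Lemma compR_nl P y k L R w : In (L, R) (compR P y k) -> In w (nls (L ++ R)) -> In w (nlF P) \/ w = k.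
Proof.
  intros H Hw. destruct P; try destruct f; simpl in H; try contradiction;
  repeat destruct H as [H|H]; try contradiction; inversion H; subst; clear H;
  unfold nls in Hw; simpl in Hw; rewrite ?app_nil_r in Hw; simpl;
  repeat match goal with a : nlab |- _ => destruct a end; simpl in *; intuition.
Qed.

Lemma NL_notinv l m Lc Rc NL NR Ps ew en P :
  rinst l m Lc Rc NL NR Ps ew en -> In P NL -> ~ isInvL P.
Proof.
  intros H HP. destruct H; simpl in HP; repeat destruct HP as [<-|HP]; try contradiction; simpl; auto;
  match goal with t : atomT |- _ => destruct t; simpl; auto end.
Qed.
Lemma NR_notinv l m Lc Rc NL NR Ps ew en P :
  rinst l m Lc Rc NL NR Ps ew en -> In P NR -> ~ isInvR P.
Proof.
  intros H HP. destruct H; simpl in HP; repeat destruct HP as [<-|HP]; try contradiction; simpl; auto.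
Qed.

Definition eigF (ew : option wlab) (en : option nat) : list lform :=
  (match ew with Some y => [LF y Bot] | None => [] end) ++
  (match en with Some n => [InN (NV n) 0] | None => [] end).
Definition psL (Ps : list (list lform * list lform)) : list lform :=
  concat (map (fun p => fst p ++ snd p) Ps).

Lemma psL_in Ps L R : In (L, R) Ps -> incl (L ++ R) (psL Ps).
Proof. intros H z Hz. unfold psL. apply in_concat. exists (L ++ R). split; auto.
  apply in_map_iff. exists (L, R); auto. Qed.

Lemma perm_in_split {A} (P : A) G : In P G -> exists G2, Permutation G (P :: G2).
Proof. intro H. apply in_split in H. destruct H as (l1 & l2 & ->). exists (l1 ++ l2).
  apply Permutation_sym, Permutation_middle. Qed.

Lemma not_in_wls_app x L1 L2 : ~ In x (wls (L1 ++ L2)) <-> ~ In x (wls L1) /\ ~ In x (wls L2).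
Proof. rewrite wls_app, in_app_iff; tauto. Qed.
Lemma not_in_nls_app x L1 L2 : ~ In x (nls (L1 ++ L2)) <-> ~ In x (nls L1) /\ ~ In x (nls L2).
Proof. rewrite nls_app, in_app_iff; tauto. Qed.

Lemma wls_cons x F L : In x (wls (F :: L)) <-> In x (wlF F) \/ In x (wls L).
Proof. unfold wls; simpl; rewrite in_app_iff; tauto. Qed.
Lemma nls_cons x F L : In x (nls (F :: L)) <-> In x (nlF F) \/ In x (nls L).
Proof. unfold nls; simpl; rewrite in_app_iff; tauto. Qed.

Lemma perm_sub {A} (G L : list A) : Permutation G L -> forall z, In z L -> In z G.
Proof. intros H z Hz. eapply Permutation_in; [apply Permutation_sym, H|auto]. Qed.
Lemma perm_sub' {A} (G L : list A) : Permutation G L -> forall z, In z G -> In z L.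
Proof. intros H z Hz. eapply Permutation_in; [apply H|auto]. Qed.

Lemma notin_wls_incl y L1 L2 : incl L1 L2 -> ~ In y (wls L2) -> ~ In y (wls L1).
Proof. intros H1 H2 H3. apply H2. eapply wls_incl; eauto. Qed.
Lemma notin_nls_incl y L1 L2 : incl L1 L2 -> ~ In y (nls L2) -> ~ In y (nls L1).
Proof. intros H1 H2 H3. apply H2. eapply nls_incl; eauto. Qed.

Lemma notin_wlF y F L : In F L -> ~ In y (wls L) -> ~ In y (wlF F).
Proof. intros H1 H2 H3. apply H2, in_wls. eauto. Qed.
Lemma notin_nlF y F L : In F L -> ~ In y (nls L) -> ~ In y (nlF F).
Proof. intros H1 H2 H3. apply H2, in_nls. eauto. Qed.

Lemma eigF_w y en : In y (wls (eigF (Some y) en)).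
Proof. unfold eigF, wls; simpl. auto. Qed.
Lemma eigF_n n ew : In n (nls (eigF ew (Some n))).
Proof. unfold eigF, nls; destruct ew; simpl; auto. Qed.

Ltac memb := try (let z := fresh "z" in let Hz := fresh "Hz" in intros z Hz); repeat rewrite in_app_iff in *; simpl in *; intuition (subst; eauto 3).

Lemma fresh_new_w y0 y' P L R X :
  ~ In y0 (wlF P) -> y0 <> y' -> (forall w, In w (wls (L ++ R)) -> In w (wlF P) \/ w = y') ->
  ~ In y0 (wls X) -> ~ In y0 (wls ((L ++ R) ++ X)).
Proof.
  intros H1 H2 H3 H4 H. rewrite wls_app, in_app_iff in H. destruct H as [H|H]; auto.
  apply H3 in H. destruct H; auto.
Qed.
Lemma fresh_new_n y0 y' P L R X :
  ~ In y0 (nlF P) -> y0 <> y' -> (forall w, In w (nls (L ++ R)) -> In w (nlF P) \/ w = y') ->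
  ~ In y0 (nls X) -> ~ In y0 (nls ((L ++ R) ++ X)).
Proof.
  intros H1 H2 H3 H4 H. rewrite nls_app, in_app_iff in H. destruct H as [H|H]; auto.
  apply H3 in H. destruct H; auto.
Qed.

Theorem invL_thm l m G D : seqS l m G D -> forall P G1, Permutation G (P :: G1) -> isInvL P ->
  forall y k, ~ In y (wls (G ++ D)) -> ~ In k (nls (G ++ D)) ->
  forall Lp Rp, In (Lp, Rp) (compL P y k) -> seqS l m (Lp ++ G1) (Rp ++ D).
Proof.
  induction 1 as [Lc Rc NL NR Ps ew en G0 D0 G D Hr HG HD HNL HNR Hew Hen Hp IH].
  intros P G1 HP1 HinvP y k Hy Hk Lp Rp HLR.
  assert (HPG : In P G) by (eapply perm_sub; [exact HP1|left; auto]).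
  assert (FG : forall z, In z (Lc ++ G0) -> In z G) by (apply perm_sub; auto).
  assert (FG1 : forall z, In z (P :: G1) -> In z G) by (apply perm_sub; auto).
  assert (FD : forall z, In z (Rc ++ D0) -> In z D) by (apply perm_sub; auto).
  destruct (in_dec lform_eq_dec P G0) as [HPG0|HPG0].
  - destruct (perm_in_split P G0 HPG0) as [G2 HG2].
    assert (FG2 : forall z, In z (P :: G2) -> In z G0) by (apply perm_sub; auto).
    set (BL := G ++ D ++ psL Ps ++ eigF ew en).
    set (y' := freshW BL). set (k' := freshN BL).
    assert (Hy'P : ~ In y' (wlF P)).
    { apply (notin_wlF _ _ BL); [unfold BL; memb|apply freshW_ok, incl_refl]. }
    assert (Hk'P : ~ In k' (nlF P)).
    { apply (notin_nlF _ _ BL); [unfold BL; memb|apply freshN_ok, incl_refl]. }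
    rewrite <- (compL_ren P y' k' y k Hy'P Hk'P) in HLR.
    apply in_map_iff in HLR. destruct HLR as [[Lq Rq] [Heq HLq]].
    unfold subP in Heq; simpl in Heq; inversion Heq; subst Lp Rp; clear Heq.
    assert (HG1 : Permutation G1 (Lc ++ G2)).
    { apply (Permutation_cons_inv (a := P)). eapply Permutation_trans; [apply Permutation_sym, HP1|].
      eapply Permutation_trans; [exact HG|]. eapply Permutation_trans; [apply Permutation_app_head, HG2|].
      apply Permutation_sym, Permutation_middle. }
    assert (Hmain : seqS l m (Lq ++ G1) (Rq ++ D)).
    { apply seqS_perm with (G := Lc ++ Lq ++ G2) (D := Rc ++ Rq ++ D0).
      2: { eapply Permutation_trans; [|apply Permutation_app_head, Permutation_sym, HG1]. perm. }
      2: { eapply Permutation_trans; [|apply Permutation_app_head, Permutation_sym, HD]. perm. }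
      eapply SS with (G0 := Lq ++ G2) (D0 := Rq ++ D0); [exact Hr|apply Permutation_refl|apply Permutation_refl|..].
      - intros z Hz. apply in_or_app; right. pose proof (HNL z Hz) as Hz0.
        apply (perm_sub' _ _ HG2) in Hz0. destruct Hz0 as [<-|Hz0]; auto.
        exfalso. eapply NL_notinv; eauto.
      - intros z Hz; apply in_or_app; right; auto.
      - intros y0 Hy0.
        assert (Hy0G : ~ In y0 (wls (G ++ D))) by (apply Hew; auto).
        intro Hin. eapply (fresh_new_w y0 y' P Lq Rq (Lc ++ G2 ++ Rc ++ D0)).
        + apply (notin_wlF _ _ (G ++ D)); [memb|auto].
        + intro Heq. apply (freshW_ok BL (eigF ew en)); [unfold BL; memb|]. rewrite Hy0, Heq. apply eigF_w.
        + intros w Hw. eapply compL_wl; eauto.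
        + eapply notin_wls_incl; [|exact Hy0G]. intros z Hz. rewrite !in_app_iff in *.
          destruct Hz as [Hz|[Hz|[Hz|Hz]]];
          [left; apply FG; apply in_or_app; left; auto | left; apply FG; apply in_or_app; right; apply FG2; right; auto
          |right; apply FD; apply in_or_app; left; auto|right; apply FD; apply in_or_app; right; auto].
        + eapply wls_perm; [|exact Hin]. perm.
      - intros n0 Hn0.
        assert (Hn0G : ~ In n0 (nls (G ++ D))) by (apply Hen; auto).
        intro Hin. eapply (fresh_new_n n0 k' P Lq Rq (Lc ++ G2 ++ Rc ++ D0)).
        + apply (notin_nlF _ _ (G ++ D)); [memb|auto].
        + intro Heq. apply (freshN_ok BL (eigF ew en)); [unfold BL; memb|]. rewrite Hn0, Heq. apply eigF_n.
        + intros w Hw. eapply compL_nl; eauto.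
        + eapply notin_nls_incl; [|exact Hn0G]. intros z Hz. rewrite !in_app_iff in *.
          destruct Hz as [Hz|[Hz|[Hz|Hz]]];
          [left; apply FG; apply in_or_app; left; auto | left; apply FG; apply in_or_app; right; apply FG2; right; auto
          |right; apply FD; apply in_or_app; left; auto|right; apply FD; apply in_or_app; right; auto].
        + eapply nls_perm; [|exact Hin]. perm.
      - intros Lp Rp HLp.
        assert (Hf : incl ((Lp ++ G0) ++ Rp ++ D0) BL).
        { pose proof (psL_in _ _ _ HLp) as Hps. unfold BL. intros z Hz. rewrite !in_app_iff in *.
          specialize (Hps z). rewrite in_app_iff in Hps. intuition. }
        specialize (IH Lp Rp HLp P (Lp ++ G2) ltac:(eapply Permutation_trans; [apply Permutation_app_head, HG2|]; apply Permutation_sym, Permutation_middle)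
                   HinvP y' k' (freshW_ok _ _ Hf) (freshN_ok _ _ Hf) Lq Rq HLq).
        eapply seqS_perm; [exact IH|perm|perm]. }
    apply (seqS_rename l m y' y k' k Lq Rq G1 D); auto.
    + apply (freshW_ok BL (G1 ++ D)). unfold BL; memb.
    + apply (freshN_ok BL (G1 ++ D)). unfold BL; memb.
  - assert (HPLc : In P Lc).
    { destruct (in_app_or _ _ _ (perm_sub' _ _ HG _ HPG)); [auto|contradiction]. }
    destruct Hr; simpl in HPLc; try contradiction;
      (destruct HPLc as [<-|[]]; simpl in HinvP; try contradiction).
    assert (Hy0 : ~ In y0 (wls (G ++ D))) by (apply Hew; auto).
    assert (Hk0 : ~ In k0 (nls (G ++ D))) by (apply Hen; auto).
    assert (HG01 : Permutation G0 G1).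
    { apply (Permutation_cons_inv (a := P0)). eapply Permutation_trans; [apply Permutation_sym, HG|exact HP1]. }
    rewrite <- (compL_ren P0 y0 k0 y k) in HLR;
      [|apply (notin_wlF _ _ (G ++ D)); [memb|auto]|apply (notin_nlF _ _ (G ++ D)); [memb|auto]].
    apply in_map_iff in HLR. destruct HLR as [[Lq Rq] [Heq HLq]].
    unfold subP in Heq; simpl in Heq; inversion Heq; subst Lp Rp; clear Heq.
    pose proof (Hp Lq Rq HLq) as H1.
    apply (seqS_rename l m y0 y k0 k) in H1.
    + eapply seqS_perm; [exact H1|apply Permutation_app_head; auto|apply Permutation_app_head, Permutation_sym; auto].
    + eapply notin_wls_incl; [|exact Hy0]. memb.
    + eapply notin_nls_incl; [|exact Hk0]. memb.
Qed.

Theorem invR_thm l m G D : seqS l m G D -> forall P D1, Permutation D (P :: D1) -> isInvR P ->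
  forall y k, ~ In y (wls (G ++ D)) -> ~ In k (nls (G ++ D)) ->
  forall Lp Rp, In (Lp, Rp) (compR P y k) -> seqS l m (Lp ++ G) (Rp ++ D1).
Proof.
  induction 1 as [Lc Rc NL NR Ps ew en G0 D0 G D Hr HG HD HNL HNR Hew Hen Hp IH].
  intros P D1 HP1 HinvP y k Hy Hk Lp Rp HLR.
  assert (HPD : In P D) by (eapply perm_sub; [exact HP1|left; auto]).
  assert (FG : forall z, In z (Lc ++ G0) -> In z G) by (apply perm_sub; auto).
  assert (FD1 : forall z, In z (P :: D1) -> In z D) by (apply perm_sub; auto).
  assert (FD : forall z, In z (Rc ++ D0) -> In z D) by (apply perm_sub; auto).
  destruct (in_dec lform_eq_dec P D0) as [HPD0|HPD0].
  - destruct (perm_in_split P D0 HPD0) as [D2 HD2].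
    assert (FD2 : forall z, In z (P :: D2) -> In z D0) by (apply perm_sub; auto).
    set (BL := G ++ D ++ psL Ps ++ eigF ew en).
    set (y' := freshW BL). set (k' := freshN BL).
    assert (Hy'P : ~ In y' (wlF P)).
    { apply (notin_wlF _ _ BL); [unfold BL; memb|apply freshW_ok, incl_refl]. }
    assert (Hk'P : ~ In k' (nlF P)).
    { apply (notin_nlF _ _ BL); [unfold BL; memb|apply freshN_ok, incl_refl]. }
    rewrite <- (compR_ren P y' k' y k Hy'P Hk'P) in HLR.
    apply in_map_iff in HLR. destruct HLR as [[Lq Rq] [Heq HLq]].
    unfold subP in Heq; simpl in Heq; inversion Heq; subst Lp Rp; clear Heq.
    assert (HD1 : Permutation D1 (Rc ++ D2)).
    { apply (Permutation_cons_inv (a := P)). eapply Permutation_trans; [apply Permutation_sym, HP1|].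
      eapply Permutation_trans; [exact HD|]. eapply Permutation_trans; [apply Permutation_app_head, HD2|].
      apply Permutation_sym, Permutation_middle. }
    assert (Hmain : seqS l m (Lq ++ G) (Rq ++ D1)).
    { apply seqS_perm with (G := Lc ++ Lq ++ G0) (D := Rc ++ Rq ++ D2).
      2: { eapply Permutation_trans; [|apply Permutation_app_head, Permutation_sym, HG]. perm. }
      2: { eapply Permutation_trans; [|apply Permutation_app_head, Permutation_sym, HD1]. perm. }
      eapply SS with (G0 := Lq ++ G0) (D0 := Rq ++ D2); [exact Hr|apply Permutation_refl|apply Permutation_refl|..].
      - intros z Hz; apply in_or_app; right; auto.
      - intros z Hz. apply in_or_app; right. pose proof (HNR z Hz) as Hz0.
        apply (perm_sub' _ _ HD2) in Hz0. destruct Hz0 as [<-|Hz0]; auto.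
        exfalso. eapply NR_notinv; eauto.
      - intros y0 Hy0.
        assert (Hy0G : ~ In y0 (wls (G ++ D))) by (apply Hew; auto).
        intro Hin. eapply (fresh_new_w y0 y' P Lq Rq (Lc ++ G0 ++ Rc ++ D2)).
        + apply (notin_wlF _ _ (G ++ D)); [memb|auto].
        + intro Heq. apply (freshW_ok BL (eigF ew en)); [unfold BL; memb|]. rewrite Hy0, Heq. apply eigF_w.
        + intros w Hw. eapply compR_wl; eauto.
        + eapply notin_wls_incl; [|exact Hy0G]. intros z Hz. rewrite !in_app_iff in *.
          destruct Hz as [Hz|[Hz|[Hz|Hz]]];
          [left; apply FG; apply in_or_app; left; auto | left; apply FG; apply in_or_app; right; auto
          |right; apply FD; apply in_or_app; left; auto|right; apply FD; apply in_or_app; right; apply FD2; right; auto].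
        + eapply wls_perm; [|exact Hin]. perm.
      - intros n0 Hn0.
        assert (Hn0G : ~ In n0 (nls (G ++ D))) by (apply Hen; auto).
        intro Hin. eapply (fresh_new_n n0 k' P Lq Rq (Lc ++ G0 ++ Rc ++ D2)).
        + apply (notin_nlF _ _ (G ++ D)); [memb|auto].
        + intro Heq. apply (freshN_ok BL (eigF ew en)); [unfold BL; memb|]. rewrite Hn0, Heq. apply eigF_n.
        + intros w Hw. eapply compR_nl; eauto.
        + eapply notin_nls_incl; [|exact Hn0G]. intros z Hz. rewrite !in_app_iff in *.
          destruct Hz as [Hz|[Hz|[Hz|Hz]]];
          [left; apply FG; apply in_or_app; left; auto | left; apply FG; apply in_or_app; right; auto
          |right; apply FD; apply in_or_app; left; auto|right; apply FD; apply in_or_app; right; apply FD2; right; auto].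
        + eapply nls_perm; [|exact Hin]. perm.
      - intros Lp Rp HLp.
        assert (Hf : incl ((Lp ++ G0) ++ Rp ++ D0) BL).
        { pose proof (psL_in _ _ _ HLp) as Hps. unfold BL. intros z Hz. rewrite !in_app_iff in *.
          specialize (Hps z). rewrite in_app_iff in Hps. intuition. }
        specialize (IH Lp Rp HLp P (Rp ++ D2) ltac:(eapply Permutation_trans; [apply Permutation_app_head, HD2|]; apply Permutation_sym, Permutation_middle)
                   HinvP y' k' (freshW_ok _ _ Hf) (freshN_ok _ _ Hf) Lq Rq HLq).
        eapply seqS_perm; [exact IH|perm|perm]. }
    apply (seqS_rename l m y' y k' k Lq Rq G D1); auto.
    + apply (freshW_ok BL (G ++ D1)). unfold BL; memb.
    + apply (freshN_ok BL (G ++ D1)). unfold BL; memb.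
  - assert (HPRc : In P Rc).
    { destruct (in_app_or _ _ _ (perm_sub' _ _ HD _ HPD)); [auto|contradiction]. }
    destruct Hr; simpl in HPRc; try contradiction;
      (destruct HPRc as [<-|[]]; simpl in HinvP; try contradiction).
    assert (Hy0 : ~ In y0 (wls (G ++ D))) by (apply Hew; auto).
    assert (Hk0 : ~ In k0 (nls (G ++ D))) by (apply Hen; auto).
    assert (HD01 : Permutation D0 D1).
    { apply (Permutation_cons_inv (a := P0)). eapply Permutation_trans; [apply Permutation_sym, HD|exact HP1]. }
    rewrite <- (compR_ren P0 y0 k0 y k) in HLR;
      [|apply (notin_wlF _ _ (G ++ D)); [memb|auto]|apply (notin_nlF _ _ (G ++ D)); [memb|auto]].
    apply in_map_iff in HLR. destruct HLR as [[Lq Rq] [Heq HLq]].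
    unfold subP in Heq; simpl in Heq; inversion Heq; subst Lp Rp; clear Heq.
    pose proof (Hp Lq Rq HLq) as H1.
    apply (seqS_rename l m y0 y k0 k) in H1.
    + eapply seqS_perm; [exact H1|apply Permutation_app_head, Permutation_sym; auto|apply Permutation_app_head; auto].
    + eapply notin_wls_incl; [|exact Hy0]. memb.
    + eapply notin_nls_incl; [|exact Hk0]. memb.
Qed.

Definition CL l m F := forall G D, seqS l m (F :: F :: G) D -> seqS l m (F :: G) D.
Definition CR l m F := forall G D, seqS l m G (F :: F :: D) -> seqS l m G (F :: D).

Lemma compL_weight P y k L R F : In (L, R) (compL P y k) -> In F (L ++ R) -> weight F < weight P.
Proof.
  intros H HF. destruct P; try destruct f; simpl in H; try contradiction;
  repeat destruct H as [H|H]; try contradiction; inversion H; subst; clear H;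
  simpl in HF; repeat destruct HF as [<-|HF]; try contradiction; simpl; lia.
Qed.
Lemma compR_weight P y k L R F : In (L, R) (compR P y k) -> In F (L ++ R) -> weight F < weight P.
Proof.
  intros H HF. destruct P; try destruct f; simpl in H; try contradiction;
  repeat destruct H as [H|H]; try contradiction; inversion H; subst; clear H;
  simpl in HF; repeat destruct HF as [<-|HF]; try contradiction; simpl; lia.
Qed.

Lemma contr_listL l m L : (forall F, In F L -> CL l m F) ->
  forall G D, seqS l m (L ++ L ++ G) D -> seqS l m (L ++ G) D.
Proof.
  induction L as [|a L IHL]; intros HC G D H; simpl in *; auto.
  assert (H1 : seqS l m (a :: a :: L ++ L ++ G) D) by (eapply seqS_perm; [exact H|perm|apply Permutation_refl]).
  apply (HC a (or_introl eq_refl)) in H1.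
  assert (H2 : seqS l m (L ++ L ++ a :: G) D) by (eapply seqS_perm; [exact H1|perm|apply Permutation_refl]).
  apply IHL in H2; auto.
  eapply seqS_perm; [exact H2|perm|apply Permutation_refl].
Qed.
Lemma contr_listR l m R : (forall F, In F R -> CR l m F) ->
  forall G D, seqS l m G (R ++ R ++ D) -> seqS l m G (R ++ D).
Proof.
  induction R as [|a R IHR]; intros HC G D H; simpl in *; auto.
  assert (H1 : seqS l m G (a :: a :: R ++ R ++ D)) by (eapply seqS_perm; [exact H|apply Permutation_refl|perm]).
  apply (HC a (or_introl eq_refl)) in H1.
  assert (H2 : seqS l m G (R ++ R ++ a :: D)) by (eapply seqS_perm; [exact H1|apply Permutation_refl|perm]).
  apply IHR in H2; auto.
  eapply seqS_perm; [exact H2|apply Permutation_refl|perm].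
Qed.

Lemma Lc_shape l m Lc Rc NL NR Ps ew en F :
  rinst l m Lc Rc NL NR Ps ew en -> In F Lc ->
  Lc = [F] /\ ((Ps = [] /\ NL = [] /\ NR = [] /\ ew = None /\ en = None) \/
               (isInvL F /\ Rc = [] /\ NL = [] /\ NR = [] /\ exists y k, Ps = compL F y k /\ ew = Some y /\ en = Some k)).
Proof.
  intros H HF. destruct H; simpl in HF; try contradiction; destruct HF as [<-|[]]; split; auto;
  first [left; repeat split; reflexivity | right; repeat split; eauto].
Qed.
Lemma Rc_shape l m Lc Rc NL NR Ps ew en F :
  rinst l m Lc Rc NL NR Ps ew en -> In F Rc ->
  Rc = [F] /\ ((Ps = [] /\ NL = [] /\ NR = [] /\ ew = None /\ en = None) \/
               (isInvR F /\ Lc = [] /\ NL = [] /\ NR = [] /\ exists y k, Ps = compR F y k /\ ew = Some y /\ en = Some k)).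
Proof.
  intros H HF. destruct H; simpl in HF; try contradiction; destruct HF as [<-|[]]; split; auto;
  first [left; repeat split; reflexivity | right; repeat split; eauto].
Qed.

Lemma two_in_ctx {A} (F : A) G Lc G0 : Permutation (F :: F :: G) (Lc ++ G0) -> ~ In F Lc ->
  exists G2, Permutation G0 (F :: F :: G2) /\ Permutation G (Lc ++ G2).
Proof.
  intros HP HF.
  assert (H1 : In F G0).
  { assert (In F (Lc ++ G0)) by (eapply perm_sub'; [exact HP|left; auto]).
    apply in_app_or in H; tauto. }
  destruct (perm_in_split F G0 H1) as [G3 HG3].
  assert (H2 : Permutation (F :: G) (Lc ++ G3)).
  { apply (Permutation_cons_app_inv _ _ (a := F)). eapply Permutation_trans; [exact HP|].
    apply Permutation_app_head; auto. }
  assert (H3 : In F G3).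
  { assert (In F (Lc ++ G3)) by (eapply perm_sub'; [exact H2|left; auto]).
    apply in_app_or in H; tauto. }
  destruct (perm_in_split F G3 H3) as [G2 HG2].
  exists G2. split.
  - eapply Permutation_trans; [exact HG3|]. apply perm_skip; auto.
  - apply (Permutation_cons_app_inv _ _ (a := F)). eapply Permutation_trans; [exact H2|].
    apply Permutation_app_head; auto.
Qed.

Lemma contr_step l m F : (forall F', weight F' < weight F -> CL l m F' /\ CR l m F') -> CL l m F /\ CR l m F.
Proof.
  intros IHw. split.
  -
    assert (Hgen : forall G' D, seqS l m G' D -> forall G, Permutation G' (F :: F :: G) -> seqS l m (F :: G) D).
    2: { intros G D H. eapply Hgen; eauto. }
    induction 1 as [Lc Rc NL NR Ps ew en G0 D0 G' D Hr HG HD HNL HNR Hew Hen Hp IH].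
    intros G HG'.
    assert (HGG : Permutation (F :: F :: G) (Lc ++ G0)) by (eapply Permutation_trans; [apply Permutation_sym, HG'|exact HG]).
    assert (FG : forall z, In z (F :: G) -> In z G').
    { intros z Hz. eapply perm_sub; [exact HG'|]. simpl in *; tauto. }
    destruct (in_dec lform_eq_dec F Lc) as [HF|HF].
    + destruct (Lc_shape _ _ _ _ _ _ _ _ _ F Hr HF) as [-> Hsh].
      assert (HG0 : Permutation G0 (F :: G)).
      { apply (Permutation_cons_inv (a := F)). apply Permutation_sym; auto. }
      destruct Hsh as [(-> & -> & -> & -> & ->)|(HinvF & -> & -> & -> & y0 & k0 & -> & -> & ->)].
      * eapply SS with (G0 := G) (D0 := D0); [exact Hr|apply Permutation_refl|exact HD|apply incl_nil_l|apply incl_nil_l|intros; discriminate|intros; discriminate|intros ? ? []].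
      * assert (Hy0 : ~ In y0 (wls (G' ++ D))) by (apply Hew; auto).
        assert (Hk0 : ~ In k0 (nls (G' ++ D))) by (apply Hen; auto).
        assert (FD : forall z, In z D0 -> In z D) by (intros z Hz; eapply perm_sub; [exact HD|]; auto).
        assert (FG0 : forall z, In z G0 -> In z G') by (intros z Hz; apply FG; eapply perm_sub'; [exact HG0|auto]).
        assert (FG1 : forall z, In z G -> In z G') by (intros z Hz; apply FG; right; auto).
        eapply SS with (G0 := G) (D0 := D0); [exact Hr|apply Permutation_refl|exact HD|apply incl_nil_l|apply incl_nil_l|..].
        -- intros y Hy; inversion Hy; subst. eapply notin_wls_incl; [|exact Hy0]. memb.
        -- intros y Hy; inversion Hy; subst. eapply notin_nls_incl; [|exact Hk0]. memb.
        -- intros Lp Rp HLp.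
           pose proof (Hp Lp Rp HLp) as H1.
           set (BL := G' ++ D ++ Lp ++ Rp ++ [LF y0 Bot; InN (NV k0) 0]).
           set (y' := freshW BL). set (k' := freshN BL).
           assert (HFy : ~ In y' (wlF F)) by (apply (notin_wlF _ _ BL); [unfold BL; memb|apply freshW_ok, incl_refl]).
           assert (HFk : ~ In k' (nlF F)) by (apply (notin_nlF _ _ BL); [unfold BL; memb|apply freshN_ok, incl_refl]).
           assert (HLp' := HLp). rewrite <- (compL_ren F y' k' y0 k0 HFy HFk) in HLp'.
           apply in_map_iff in HLp'. destruct HLp' as [[Lq Rq] [Heq HLq]].
           unfold subP in Heq; simpl in Heq; injection Heq as HeL HeR.
           assert (Hf : incl ((Lp ++ G0) ++ Rp ++ D0) BL).
           { unfold BL. intros z Hz. rewrite !in_app_iff in *. intuition. }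
           pose proof (invL_thm _ _ _ _ H1 F (Lp ++ G) ltac:(eapply Permutation_trans; [apply Permutation_app_head, HG0|]; apply Permutation_sym, Permutation_middle)
                        HinvF y' k' (freshW_ok _ _ Hf) (freshN_ok _ _ Hf) Lq Rq HLq) as Hiv.
           apply (seqS_rename l m y' y0 k' k0 Lq Rq (Lp ++ G) (Rp ++ D0)) in Hiv.
           ++ rewrite HeL, HeR in Hiv.
              apply contr_listR; [intros F' HF'; apply IHw; eapply compL_weight; [exact HLp|apply in_or_app; right; auto]|].
              apply contr_listL; [intros F' HF'; apply IHw; eapply compL_weight; [exact HLp|apply in_or_app; left; auto]|].
              exact Hiv.
           ++ apply (freshW_ok BL). unfold BL. intros z Hz. rewrite !in_app_iff in *. intuition.
           ++ apply (freshN_ok BL). unfold BL. intros z Hz. rewrite !in_app_iff in *. intuition.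
    + destruct (two_in_ctx F G Lc G0 HGG HF) as (G2 & HG02 & HGL).
      eapply SS with (G0 := F :: G2) (D0 := D0); [exact Hr| |exact HD| | |..].
      * eapply Permutation_trans; [apply perm_skip, HGL|]. apply Permutation_middle.
      * intros z Hz. apply HNL in Hz. apply (perm_sub' _ _ HG02) in Hz. simpl in *; tauto.
      * auto.
      * intros y Hy. eapply notin_wls_incl; [|apply (Hew y Hy)].
        intros z Hz. rewrite !in_app_iff in *. destruct Hz; auto.
      * intros y Hy. eapply notin_nls_incl; [|apply (Hen y Hy)].
        intros z Hz. rewrite !in_app_iff in *. destruct Hz; auto.
      * intros Lp Rp HLp. eapply seqS_perm; [apply (IH Lp Rp HLp (Lp ++ G2))|perm|apply Permutation_refl].
        eapply Permutation_trans; [apply Permutation_app_head, HG02|]. perm.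
  -
    assert (Hgen : forall G D', seqS l m G D' -> forall D, Permutation D' (F :: F :: D) -> seqS l m G (F :: D)).
    2: { intros G D H. eapply Hgen; eauto. }
    induction 1 as [Lc Rc NL NR Ps ew en G0 D0 G D' Hr HG HD HNL HNR Hew Hen Hp IH].
    intros D HD'.
    assert (HDD : Permutation (F :: F :: D) (Rc ++ D0)) by (eapply Permutation_trans; [apply Permutation_sym, HD'|exact HD]).
    assert (FD : forall z, In z (F :: D) -> In z D').
    { intros z Hz. eapply perm_sub; [exact HD'|]. simpl in *; tauto. }
    destruct (in_dec lform_eq_dec F Rc) as [HF|HF].
    + destruct (Rc_shape _ _ _ _ _ _ _ _ _ F Hr HF) as [-> Hsh].
      assert (HD0 : Permutation D0 (F :: D)).
      { apply (Permutation_cons_inv (a := F)). apply Permutation_sym; auto. }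
      destruct Hsh as [(-> & -> & -> & -> & ->)|(HinvF & -> & -> & -> & y0 & k0 & -> & -> & ->)].
      * eapply SS with (G0 := G0) (D0 := D); [exact Hr|exact HG|apply Permutation_refl|apply incl_nil_l|apply incl_nil_l|intros; discriminate|intros; discriminate|intros ? ? []].
      * assert (Hy0 : ~ In y0 (wls (G ++ D'))) by (apply Hew; auto).
        assert (Hk0 : ~ In k0 (nls (G ++ D'))) by (apply Hen; auto).
        assert (FG : forall z, In z G0 -> In z G) by (intros z Hz; eapply perm_sub; [exact HG|]; auto).
        assert (FD0 : forall z, In z D0 -> In z D') by (intros z Hz; apply FD; eapply perm_sub'; [exact HD0|auto]).
        assert (FD1 : forall z, In z D -> In z D') by (intros z Hz; apply FD; right; auto).
        eapply SS with (G0 := G0) (D0 := D); [exact Hr|exact HG|apply Permutation_refl|apply incl_nil_l|apply incl_nil_l|..].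
        -- intros y Hy; inversion Hy; subst. eapply notin_wls_incl; [|exact Hy0]. memb.
        -- intros y Hy; inversion Hy; subst. eapply notin_nls_incl; [|exact Hk0]. memb.
        -- intros Lp Rp HLp.
           pose proof (Hp Lp Rp HLp) as H1.
           set (BL := G ++ D' ++ Lp ++ Rp ++ [LF y0 Bot; InN (NV k0) 0]).
           set (y' := freshW BL). set (k' := freshN BL).
           assert (HFy : ~ In y' (wlF F)) by (apply (notin_wlF _ _ BL); [unfold BL; memb|apply freshW_ok, incl_refl]).
           assert (HFk : ~ In k' (nlF F)) by (apply (notin_nlF _ _ BL); [unfold BL; memb|apply freshN_ok, incl_refl]).
           assert (HLp' := HLp). rewrite <- (compR_ren F y' k' y0 k0 HFy HFk) in HLp'.
           apply in_map_iff in HLp'. destruct HLp' as [[Lq Rq] [Heq HLq]].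
           unfold subP in Heq; simpl in Heq; injection Heq as HeL HeR.
           assert (Hf : incl ((Lp ++ G0) ++ Rp ++ D0) BL).
           { unfold BL. intros z Hz. rewrite !in_app_iff in *. intuition. }
           pose proof (invR_thm _ _ _ _ H1 F (Rp ++ D) ltac:(eapply Permutation_trans; [apply Permutation_app_head, HD0|]; apply Permutation_sym, Permutation_middle)
                        HinvF y' k' (freshW_ok _ _ Hf) (freshN_ok _ _ Hf) Lq Rq HLq) as Hiv.
           apply (seqS_rename l m y' y0 k' k0 Lq Rq (Lp ++ G0) (Rp ++ D)) in Hiv.
           ++ rewrite HeL, HeR in Hiv.
              apply contr_listR; [intros F' HF'; apply IHw; eapply compR_weight; [exact HLp|apply in_or_app; right; auto]|].
              apply contr_listL; [intros F' HF'; apply IHw; eapply compR_weight; [exact HLp|apply in_or_app; left; auto]|].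
              exact Hiv.
           ++ apply (freshW_ok BL). unfold BL. intros z Hz. rewrite !in_app_iff in *. intuition.
           ++ apply (freshN_ok BL). unfold BL. intros z Hz. rewrite !in_app_iff in *. intuition.
    + destruct (two_in_ctx F D Rc D0 HDD HF) as (D2 & HD02 & HDL).
      eapply SS with (G0 := G0) (D0 := F :: D2); [exact Hr|exact HG| | | |..].
      * eapply Permutation_trans; [apply perm_skip, HDL|]. apply Permutation_middle.
      * auto.
      * intros z Hz. apply HNR in Hz. apply (perm_sub' _ _ HD02) in Hz. simpl in *; tauto.
      * intros y Hy. eapply notin_wls_incl; [|apply (Hew y Hy)].
        intros z Hz. rewrite !in_app_iff in *. destruct Hz; auto.
      * intros y Hy. eapply notin_nls_incl; [|apply (Hen y Hy)].
        intros z Hz. rewrite !in_app_iff in *. destruct Hz; auto.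
      * intros Lp Rp HLp. eapply seqS_perm; [apply (IH Lp Rp HLp (Rp ++ D2))|apply Permutation_refl|perm].
        eapply Permutation_trans; [apply Permutation_app_head, HD02|]. perm.
Qed.

Theorem contraction l m F : CL l m F /\ CR l m F.
Proof.
  assert (H : forall n F, weight F < n -> CL l m F /\ CR l m F).
  { induction n; intros F0 HF0; [lia|]. apply contr_step. intros F' HF'. apply IHn. lia. }
  apply (H (S (weight F))). lia.
Qed.

Corollary contrL l m F G D : seqS l m (F :: F :: G) D -> seqS l m (F :: G) D.
Proof. apply contraction. Qed.
Corollary contrR l m F G D : seqS l m G (F :: F :: D) -> seqS l m G (F :: D).
Proof. apply contraction. Qed.

Lemma wk l m G D G' D' X Y : seqS l m G D -> Permutation G' (G ++ X) -> Permutation D' (D ++ Y) -> seqS l m G' D'.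
Proof. intros H H1 H2. eapply seqS_perm; [apply seqS_weak, H|apply Permutation_sym, H1|apply Permutation_sym, H2]. Qed.

Lemma seqS_subst_fix l m sw sn L R G D :
  (forall y, In y (wls (G ++ D)) -> sw y = y) -> (forall n, In n (nls (G ++ D)) -> sn n = NV n) ->
  seqS l m (L ++ G) (R ++ D) -> seqS l m (map (subF sw sn) L ++ G) (map (subF sw sn) R ++ D).
Proof.
  intros H1 H2 H. pose proof (seqS_sub _ _ _ _ H sw sn [] []) as H0.
  rewrite !app_nil_r, !map_app in H0.
  assert (E : forall X, incl X (G ++ D) -> map (subF sw sn) X = X).
  { intros X HX. rewrite <- (map_subF_id X) at 2. apply map_agree.
    - intros y Hy. apply H1. eapply wls_incl; eauto.
    - intros y Hy. apply H2. eapply nls_incl; eauto. }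
  rewrite (E G), (E D) in H0; auto with datatypes.
Qed.

Definition upw (y x : wlab) (v : wlab) : wlab := if Nat.eq_dec v y then x else v.
Definition upn (k : nat) (c : nlab) (v : nat) : nlab := if Nat.eq_dec v k then c else NV v.

Lemma fix_upw y x L : ~ In y (wls L) -> forall v, In v (wls L) -> upw y x v = v.
Proof. intros H v Hv. unfold upw. destruct (Nat.eq_dec v y); subst; tauto. Qed.
Lemma fix_upn k c L : ~ In k (nls L) -> forall v, In v (nls L) -> upn k c v = NV v.
Proof. intros H v Hv. unfold upn. destruct (Nat.eq_dec v k); subst; tauto. Qed.
Lemma fix_idw L : forall v : wlab, In v (wls L) -> id v = v.
Proof. reflexivity. Qed.
Lemma fix_idn L : forall v, In v (nls L) -> NV v = NV v.
Proof. reflexivity. Qed.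

Lemma inv_gen_L l m P G D (HP : isInvL P) :
  seqS l m (P :: G) D -> forall y k, ~ In y (wls ((P :: G) ++ D)) -> ~ In k (nls ((P :: G) ++ D)) ->
  forall Lp Rp, In (Lp, Rp) (compL P y k) -> seqS l m (Lp ++ G) (Rp ++ D).
Proof. intros H y k Hy Hk. eapply invL_thm; eauto. Qed.
Lemma inv_gen_R l m P G D (HP : isInvR P) :
  seqS l m G (P :: D) -> forall y k, ~ In y (wls (G ++ P :: D)) -> ~ In k (nls (G ++ P :: D)) ->
  forall Lp Rp, In (Lp, Rp) (compR P y k) -> seqS l m (Lp ++ G) (Rp ++ D).
Proof. intros H y k Hy Hk. eapply invR_thm; eauto. Qed.

Ltac fr_w L := apply (freshW_ok L); intros ? ?; auto.
Ltac fr_n L := apply (freshN_ok L); intros ? ?; auto.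

Lemma upw_eq y z : upw y z y = z.
Proof. unfold upw. destruct (Nat.eq_dec y y); congruence. Qed.
Lemma upn_eq k c : upn k c k = c.
Proof. unfold upn. destruct (Nat.eq_dec k k); congruence. Qed.
Lemma subN_fix sw sn a : (forall v, In v (wlN a) -> sw v = v) -> (forall n, In n (nlN a) -> sn n = NV n) -> subN sw sn a = a.
Proof. intros H1 H2. destruct a; simpl in *; [apply H2|f_equal; apply H1]; auto. Qed.

Ltac fresh_self := first [apply freshW_ok, incl_refl | apply freshN_ok, incl_refl].

Section Inv.
Variables (l : level) (m : modext).

Lemma invAndL x A B G D : seqS l m (LF x (And A B) :: G) D -> seqS l m (LF x A :: LF x B :: G) D.
Proof. intro H. set (L := (LF x (And A B) :: G) ++ D).
  exact (inv_gen_L l m (LF x (And A B)) G D I H (freshW L) (freshN L) ltac:(fresh_self) ltac:(fresh_self) _ _ (or_introl eq_refl)). Qed.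
Lemma invOrL1 x A B G D : seqS l m (LF x (Or A B) :: G) D -> seqS l m (LF x A :: G) D.
Proof. intro H. set (L := (LF x (Or A B) :: G) ++ D).
  exact (inv_gen_L l m (LF x (Or A B)) G D I H (freshW L) (freshN L) ltac:(fresh_self) ltac:(fresh_self) _ _ (or_introl eq_refl)). Qed.
Lemma invOrL2 x A B G D : seqS l m (LF x (Or A B) :: G) D -> seqS l m (LF x B :: G) D.
Proof. intro H. set (L := (LF x (Or A B) :: G) ++ D).
  exact (inv_gen_L l m (LF x (Or A B)) G D I H (freshW L) (freshN L) ltac:(fresh_self) ltac:(fresh_self) _ _ (or_intror (or_introl eq_refl))). Qed.
Lemma invImpL1 x A B G D : seqS l m (LF x (Imp A B) :: G) D -> seqS l m G (LF x A :: D).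
Proof. intro H. set (L := (LF x (Imp A B) :: G) ++ D).
  exact (inv_gen_L l m (LF x (Imp A B)) G D I H (freshW L) (freshN L) ltac:(fresh_self) ltac:(fresh_self) _ _ (or_introl eq_refl)). Qed.
Lemma invImpL2 x A B G D : seqS l m (LF x (Imp A B) :: G) D -> seqS l m (LF x B :: G) D.
Proof. intro H. set (L := (LF x (Imp A B) :: G) ++ D).
  exact (inv_gen_L l m (LF x (Imp A B)) G D I H (freshW L) (freshN L) ltac:(fresh_self) ltac:(fresh_self) _ _ (or_intror (or_introl eq_refl))). Qed.
Lemma invAndR1 x A B G D : seqS l m G (LF x (And A B) :: D) -> seqS l m G (LF x A :: D).
Proof. intro H. set (L := G ++ LF x (And A B) :: D).
  exact (inv_gen_R l m (LF x (And A B)) G D I H (freshW L) (freshN L) ltac:(fresh_self) ltac:(fresh_self) _ _ (or_introl eq_refl)). Qed.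
Lemma invAndR2 x A B G D : seqS l m G (LF x (And A B) :: D) -> seqS l m G (LF x B :: D).
Proof. intro H. set (L := G ++ LF x (And A B) :: D).
  exact (inv_gen_R l m (LF x (And A B)) G D I H (freshW L) (freshN L) ltac:(fresh_self) ltac:(fresh_self) _ _ (or_intror (or_introl eq_refl))). Qed.
Lemma invOrR x A B G D : seqS l m G (LF x (Or A B) :: D) -> seqS l m G (LF x A :: LF x B :: D).
Proof. intro H. set (L := G ++ LF x (Or A B) :: D).
  exact (inv_gen_R l m (LF x (Or A B)) G D I H (freshW L) (freshN L) ltac:(fresh_self) ltac:(fresh_self) _ _ (or_introl eq_refl)). Qed.
Lemma invImpR x A B G D : seqS l m G (LF x (Imp A B) :: D) -> seqS l m (LF x A :: G) (LF x B :: D).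
Proof. intro H. set (L := G ++ LF x (Imp A B) :: D).
  exact (inv_gen_R l m (LF x (Imp A B)) G D I H (freshW L) (freshN L) ltac:(fresh_self) ltac:(fresh_self) _ _ (or_introl eq_refl)). Qed.

Lemma invEx a A G D : seqS l m (Ex a A :: G) D -> forall z, seqS l m (InW z a :: LF z A :: G) D.
Proof.
  intros H z. set (L := (Ex a A :: G) ++ D). set (y := freshW L).
  assert (Hy : ~ In y (wls L)) by fresh_self.
  pose proof (inv_gen_L l m (Ex a A) G D I H y (freshN L) Hy ltac:(fresh_self) _ _ (or_introl eq_refl)) as H1.
  apply (seqS_subst_fix l m (upw y z) NV [InW y a; LF y A] [] G D) in H1.
  - simpl in H1. rewrite upw_eq, subN_fix in H1; auto.
    intros v Hv. unfold upw. destruct (Nat.eq_dec v y); auto. subst. exfalso. apply Hy.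
    unfold L. simpl. unfold wls; simpl. apply in_or_app. left. destruct a; simpl in *; auto.
  - apply (fix_upw y z). intro Hin. apply Hy. eapply wls_incl; [|exact Hin]. unfold L. intros q Hq. simpl. rewrite in_app_iff in *. tauto.
  - reflexivity.
Qed.

Lemma invAll a A G D : seqS l m G (All a A :: D) -> forall z, seqS l m (InW z a :: G) (LF z A :: D).
Proof.
  intros H z. set (L := G ++ All a A :: D). set (y := freshW L).
  assert (Hy : ~ In y (wls L)) by fresh_self.
  pose proof (inv_gen_R l m (All a A) G D I H y (freshN L) Hy ltac:(fresh_self) _ _ (or_introl eq_refl)) as H1.
  apply (seqS_subst_fix l m (upw y z) NV [InW y a] [LF y A] G D) in H1.
  - simpl in H1. rewrite upw_eq, subN_fix in H1; auto.
    intros v Hv. unfold upw. destruct (Nat.eq_dec v y); auto. subst. exfalso. apply Hy.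
    unfold L. rewrite wls_app. apply in_or_app. right. unfold wls; simpl. apply in_or_app. left. destruct a; simpl in *; auto.
  - apply (fix_upw y z). intro Hin. apply Hy. eapply wls_incl; [|exact Hin]. unfold L. intros q Hq. rewrite !in_app_iff in *. simpl. tauto.
  - reflexivity.
Qed.

Lemma invCnd x a A B G D : seqS l m (Cnd x a A B :: G) D -> forall c,
  seqS l m (InN c x :: Sub c a :: Ex c A :: All c (Imp A B) :: G) D.
Proof.
  intros H c. set (L := (Cnd x a A B :: G) ++ D). set (k := freshN L).
  assert (Hk : ~ In k (nls L)) by fresh_self.
  pose proof (inv_gen_L l m (Cnd x a A B) G D I H (freshW L) k ltac:(fresh_self) Hk _ _ (or_introl eq_refl)) as H1.
  apply (seqS_subst_fix l m id (upn k c) _ [] G D) in H1.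
  - simpl in H1. rewrite upn_eq, subN_fix in H1; auto.
    intros v Hv. unfold upn. destruct (Nat.eq_dec v k); auto. subst. exfalso. apply Hk.
    unfold L. simpl. unfold nls; simpl. apply in_or_app. left. destruct a; simpl in *; auto.
  - reflexivity.
  - apply (fix_upn k c). intro Hin. apply Hk. eapply nls_incl; [|exact Hin]. unfold L. intros q Hq. simpl. rewrite in_app_iff in *. tauto.
Qed.

Lemma invCond x A B G D : seqS l m G (LF x (Cond A B) :: D) -> forall c,
  seqS l m (InN c x :: Ex c A :: G) (Cnd x c A B :: D).
Proof.
  intros H c. set (L := G ++ LF x (Cond A B) :: D). set (k := freshN L).
  assert (Hk : ~ In k (nls L)) by fresh_self.
  pose proof (inv_gen_R l m (LF x (Cond A B)) G D I H (freshW L) k ltac:(fresh_self) Hk _ _ (or_introl eq_refl)) as H1.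
  apply (seqS_subst_fix l m id (upn k c) _ _ G D) in H1.
  - simpl in H1. rewrite upn_eq in H1; auto.
  - reflexivity.
  - apply (fix_upn k c). intro Hin. apply Hk. eapply nls_incl; [|exact Hin]. unfold L. intros q Hq. rewrite !in_app_iff in *. simpl. tauto.
Qed.

End Inv.

Lemma adapt l m Lc Rc NL NR Ps ew en X Y G0 D0 Lp Rp :
  rinst l m Lc Rc NL NR Ps ew en -> In (Lp, Rp) Ps ->
  (forall y, ew = Some y -> ~ In y (wls ((X ++ Lc ++ G0) ++ Y ++ Rc ++ D0))) ->
  (forall n, en = Some n -> ~ In n (nls ((X ++ Lc ++ G0) ++ Y ++ Rc ++ D0))) ->
  seqS l m (X ++ Lc ++ G0) (Y ++ Rc ++ D0) -> seqS l m (X ++ Lp ++ G0) (Y ++ Rp ++ D0).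
Proof.
  intros Hr HP Hew Hen H.
  destruct Lc as [|F Lc'].
  - destruct Rc as [|F Rc'].
    + apply (wk l m _ _ _ _ Lp Rp H); perm.
    + destruct (Rc_shape _ _ _ _ _ _ _ _ _ F Hr (or_introl eq_refl)) as [He Hsh]. inversion He; subst.
      destruct Hsh as [(-> & _)|(HinvF & _ & -> & -> & y0 & k0 & -> & -> & ->)]; [destruct HP|].
      pose proof (invR_thm _ _ _ _ H F (Y ++ D0) ltac:(perm) HinvF y0 k0 (Hew _ eq_refl) (Hen _ eq_refl) Lp Rp HP) as H1.
      eapply seqS_perm; [exact H1|perm|perm].
  - destruct (Lc_shape _ _ _ _ _ _ _ _ _ F Hr (or_introl eq_refl)) as [He Hsh]. inversion He; subst.
    destruct Hsh as [(-> & _)|(HinvF & -> & -> & -> & y0 & k0 & -> & -> & ->)]; [destruct HP|].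
    pose proof (invL_thm _ _ _ _ H F (X ++ G0) ltac:(perm) HinvF y0 k0 (Hew _ eq_refl) (Hen _ eq_refl) Lp Rp HP) as H1.
    eapply seqS_perm; [exact H1|perm|perm].
Qed.

Definition inertR (F : lform) := forall l m Lc Rc NL NR Ps ew en,
  rinst l m Lc Rc NL NR Ps ew en -> ~ In F Rc /\ ~ In F NR.

Lemma inertR_elim l m F : inertR F -> forall G D', seqS l m G D' -> forall D, Permutation D' (F :: D) -> seqS l m G D.
Proof.
  intros HF. induction 1 as [Lc Rc NL NR Ps ew en G0 D0 G D' Hr HG HD HNL HNR Hew Hen Hp IH].
  intros D HD'. destruct (HF _ _ _ _ _ _ _ _ _ Hr) as [H1 H2].
  assert (HF0 : In F D0).
  { assert (In F (Rc ++ D0)) by (eapply perm_sub'; [exact HD|]; eapply perm_sub; [exact HD'|left; auto]).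
    apply in_app_or in H; tauto. }
  destruct (perm_in_split F D0 HF0) as [D2 HD2].
  assert (FD : forall z, In z (Rc ++ D2) -> In z D').
  { intros z Hz. eapply perm_sub; [exact HD|]. rewrite in_app_iff in *. destruct Hz; auto.
    right; eapply perm_sub; [exact HD2|right; auto]. }
  eapply SS with (G0 := G0) (D0 := D2); [exact Hr|exact HG| | | |..].
  - apply (Permutation_cons_inv (a := F)). eapply Permutation_trans; [apply Permutation_sym, HD'|].
    eapply Permutation_trans; [exact HD|]. eapply Permutation_trans; [apply Permutation_app_head, HD2|].
    apply Permutation_sym, Permutation_middle.
  - auto.
  - intros z Hz. pose proof (HNR z Hz) as Hz'. apply (perm_sub' _ _ HD2) in Hz'. destruct Hz' as [<-|]; tauto.
  - intros y Hy. eapply notin_wls_incl; [|apply (Hew y Hy)]. intros z Hz. rewrite !in_app_iff in *.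
    destruct Hz as [Hz|Hz]; auto. right. eapply perm_sub; [exact HD'|right; auto].
  - intros y Hy. eapply notin_nls_incl; [|apply (Hen y Hy)]. intros z Hz. rewrite !in_app_iff in *.
    destruct Hz as [Hz|Hz]; auto. right. eapply perm_sub; [exact HD'|right; auto].
  - intros Lp Rp HLp. apply (IH Lp Rp HLp). eapply Permutation_trans; [apply Permutation_app_head, HD2|].
    apply Permutation_sym, Permutation_middle.
Qed.

Lemma NR_shape l m Lc Rc NL NR Ps ew en F : rinst l m Lc Rc NL NR Ps ew en -> In F NR -> Lc = [] /\ Rc = [].
Proof. intros H HF. destruct H; simpl in HF; try contradiction; auto. Qed.
Lemma NL_shape l m Lc Rc NL NR Ps ew en F : rinst l m Lc Rc NL NR Ps ew en -> In F NL -> Lc = [] /\ Rc = [].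
Proof. intros H HF. destruct H; simpl in HF; try contradiction; auto. Qed.

Lemma permR l m F :
  (forall Lc Rc NL NR Ps ew en, rinst l m Lc Rc NL NR Ps ew en -> In F Rc -> In F Lc) ->
  (forall NL NR Ps ew en G0 D2, rinst l m [] [] NL NR Ps ew en -> In F NR -> incl NL G0 -> incl NR (F :: D2) ->
     (forall Lp Rp, In (Lp, Rp) Ps -> seqS l m (Lp ++ G0) (Rp ++ D2)) ->
     seqS l m (F :: G0) D2 -> seqS l m G0 D2) ->
  forall G D', seqS l m G D' -> forall D, Permutation D' (F :: D) -> seqS l m (F :: G) D -> seqS l m G D.
Proof.
  intros HRc Hpr. induction 1 as [Lc Rc NL NR Ps ew en G0 D0 G D' Hr HG HD HNL HNR Hew Hen Hp IH].
  intros D HD' H2.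
  destruct (in_dec lform_eq_dec F Rc) as [HFR|HFR].
  - assert (HFG : In F G) by (eapply perm_sub; [exact HG|]; apply in_or_app; left; eauto).
    destruct (perm_in_split F G HFG) as [G1 HG1].
    assert (H3 : seqS l m (F :: F :: G1) D) by (eapply seqS_perm; [exact H2|apply perm_skip; auto|apply Permutation_refl]).
    apply contrL in H3. eapply seqS_perm; [exact H3|apply Permutation_sym; auto|apply Permutation_refl].
  - assert (HF0 : In F D0).
    { assert (In F (Rc ++ D0)) by (eapply perm_sub'; [exact HD|]; eapply perm_sub; [exact HD'|left; auto]).
      apply in_app_or in H; tauto. }
    destruct (perm_in_split F D0 HF0) as [D2 HD2].
    assert (HDD : Permutation D (Rc ++ D2)).
    { apply (Permutation_cons_inv (a := F)). eapply Permutation_trans; [apply Permutation_sym, HD'|].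
      eapply Permutation_trans; [exact HD|]. eapply Permutation_trans; [apply Permutation_app_head, HD2|].
      apply Permutation_sym, Permutation_middle. }
    destruct (in_dec lform_eq_dec F NR) as [HFN|HFN].
    + destruct (NR_shape _ _ _ _ _ _ _ _ _ F Hr HFN) as [-> ->]. simpl in HG, HDD.
      apply (seqS_perm l m G0 D2); [|apply Permutation_sym; auto|apply Permutation_sym; auto].
      apply (Hpr NL NR Ps ew en G0 D2 Hr HFN HNL).
      * intros z Hz. eapply perm_sub'; [exact HD2|auto].
      * intros Lp Rp HLp. apply (IH Lp Rp HLp (Rp ++ D2)).
        -- eapply Permutation_trans; [apply Permutation_app_head, HD2|]. apply Permutation_sym, Permutation_middle.
        -- apply (wk l m _ _ _ _ Lp Rp H2).
           ++ eapply Permutation_trans; [|apply Permutation_app_tail, perm_skip, Permutation_sym, HG]. perm.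
           ++ eapply Permutation_trans; [|apply Permutation_app_tail, Permutation_sym, HDD]. perm.
      * eapply seqS_perm; [exact H2|apply perm_skip; auto|auto].
    + assert (FD : forall z, In z D -> In z D') by (intros z Hz; eapply perm_sub; [exact HD'|right; auto]).
      assert (F1 : forall z, In z Lc -> In z G) by (intros z Hz; eapply perm_sub; [exact HG|]; apply in_or_app; auto).
      assert (F2 : forall z, In z G0 -> In z G) by (intros z Hz; eapply perm_sub; [exact HG|]; apply in_or_app; auto).
      assert (F3 : forall z, In z Rc -> In z D') by (intros z Hz; apply FD; eapply perm_sub; [exact HDD|]; apply in_or_app; auto).
      assert (F4 : forall z, In z D2 -> In z D') by (intros z Hz; apply FD; eapply perm_sub; [exact HDD|]; apply in_or_app; auto).
      assert (F5 : In F D') by (eapply perm_sub; [exact HD'|left; auto]).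
      eapply SS with (G0 := G0) (D0 := D2); [exact Hr|exact HG|exact HDD| | |..].
      * auto.
      * intros z Hz. pose proof (HNR z Hz) as Hz'. apply (perm_sub' _ _ HD2) in Hz'. destruct Hz' as [<-|]; tauto.
      * intros y Hy. eapply notin_wls_incl; [|apply (Hew y Hy)]. intros z Hz. rewrite !in_app_iff in *. intuition.
      * intros y Hy. eapply notin_nls_incl; [|apply (Hen y Hy)]. intros z Hz. rewrite !in_app_iff in *. intuition.
      * intros Lp Rp HLp. apply (IH Lp Rp HLp (Rp ++ D2)).
        -- eapply Permutation_trans; [apply Permutation_app_head, HD2|]. apply Permutation_sym, Permutation_middle.
        -- apply (adapt l m Lc Rc NL NR Ps ew en [F] [] G0 D2 Lp Rp Hr HLp).
           ++ intros y Hy. eapply notin_wls_incl; [|apply (Hew y Hy)]. intros z Hz.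
              rewrite !in_app_iff in *. simpl in Hz. intuition (subst; auto).
           ++ intros y Hy. eapply notin_nls_incl; [|apply (Hen y Hy)]. intros z Hz.
              rewrite !in_app_iff in *. simpl in Hz. intuition (subst; auto).
           ++ eapply seqS_perm; [exact H2|apply perm_skip; auto|auto].
Qed.

Lemma permL l m F :
  (forall Lc Rc NL NR Ps ew en, rinst l m Lc Rc NL NR Ps ew en -> ~ In F Lc) ->
  (forall NL NR Ps ew en G2 D0, rinst l m [] [] NL NR Ps ew en -> In F NL -> incl NL (F :: G2) -> incl NR D0 ->
     (forall Lp Rp, In (Lp, Rp) Ps -> seqS l m (Lp ++ G2) (Rp ++ D0)) ->
     seqS l m G2 (F :: D0) -> seqS l m G2 D0) ->
  forall G' D, seqS l m G' D -> forall G, Permutation G' (F :: G) -> seqS l m G (F :: D) -> seqS l m G D.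
Proof.
  intros HLc Hpr. induction 1 as [Lc Rc NL NR Ps ew en G0 D0 G' D Hr HG HD HNL HNR Hew Hen Hp IH].
  intros G HG' H1.
  assert (HF0 : In F G0).
  { assert (In F (Lc ++ G0)) by (eapply perm_sub'; [exact HG|]; eapply perm_sub; [exact HG'|left; auto]).
    apply in_app_or in H. destruct H; auto. exfalso; eapply HLc; eauto. }
  destruct (perm_in_split F G0 HF0) as [G2 HG2].
  assert (HGG : Permutation G (Lc ++ G2)).
  { apply (Permutation_cons_inv (a := F)). eapply Permutation_trans; [apply Permutation_sym, HG'|].
    eapply Permutation_trans; [exact HG|]. eapply Permutation_trans; [apply Permutation_app_head, HG2|].
    apply Permutation_sym, Permutation_middle. }
  destruct (in_dec lform_eq_dec F NL) as [HFN|HFN].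
  - destruct (NL_shape _ _ _ _ _ _ _ _ _ F Hr HFN) as [-> ->]. simpl in HD, HGG.
    apply (seqS_perm l m G2 D0); [|apply Permutation_sym; auto|apply Permutation_sym; auto].
    apply (Hpr NL NR Ps ew en G2 D0 Hr HFN).
    + intros z Hz. eapply perm_sub'; [exact HG2|auto].
    + auto.
    + intros Lp Rp HLp. apply (IH Lp Rp HLp (Lp ++ G2)).
      * eapply Permutation_trans; [apply Permutation_app_head, HG2|]. apply Permutation_sym, Permutation_middle.
      * apply (wk l m _ _ _ _ Lp Rp H1).
        -- eapply Permutation_trans; [|apply Permutation_app_tail, Permutation_sym, HGG]. perm.
        -- eapply Permutation_trans; [|apply Permutation_app_tail, perm_skip, Permutation_sym, HD]. perm.
    + eapply seqS_perm; [exact H1|auto|apply perm_skip; auto].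
  - assert (FG : forall z, In z G -> In z G') by (intros z Hz; eapply perm_sub; [exact HG'|right; auto]).
    assert (F1 : forall z, In z Lc -> In z G') by (intros z Hz; apply FG; eapply perm_sub; [exact HGG|]; apply in_or_app; auto).
    assert (F2 : forall z, In z G2 -> In z G') by (intros z Hz; apply FG; eapply perm_sub; [exact HGG|]; apply in_or_app; auto).
    assert (F3 : forall z, In z Rc -> In z D) by (intros z Hz; eapply perm_sub; [exact HD|]; apply in_or_app; auto).
    assert (F4 : forall z, In z D0 -> In z D) by (intros z Hz; eapply perm_sub; [exact HD|]; apply in_or_app; auto).
    assert (F5 : In F G') by (eapply perm_sub; [exact HG'|left; auto]).
    eapply SS with (G0 := G2) (D0 := D0); [exact Hr|exact HGG|exact HD| | |..].
    + intros z Hz. pose proof (HNL z Hz) as Hz'. apply (perm_sub' _ _ HG2) in Hz'. destruct Hz' as [<-|]; tauto.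
    + auto.
    + intros y Hy. eapply notin_wls_incl; [|apply (Hew y Hy)]. intros z Hz. rewrite !in_app_iff in *. intuition.
    + intros y Hy. eapply notin_nls_incl; [|apply (Hen y Hy)]. intros z Hz. rewrite !in_app_iff in *. intuition.
    + intros Lp Rp HLp. apply (IH Lp Rp HLp (Lp ++ G2)).
      * eapply Permutation_trans; [apply Permutation_app_head, HG2|]. apply Permutation_sym, Permutation_middle.
      * apply (adapt l m Lc Rc NL NR Ps ew en [] [F] G2 D0 Lp Rp Hr HLp).
        -- intros y Hy. eapply notin_wls_incl; [|apply (Hew y Hy)]. intros z Hz.
           rewrite !in_app_iff in *. simpl in Hz. intuition (subst; auto).
        -- intros y Hy. eapply notin_nls_incl; [|apply (Hen y Hy)]. intros z Hz.
           rewrite !in_app_iff in *. simpl in Hz. intuition (subst; auto).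
        -- eapply seqS_perm; [exact H1|auto|apply perm_skip; auto].
Qed.

Definition CutF l m F := forall G D, seqS l m G (F :: D) -> seqS l m (F :: G) D -> seqS l m G D.

Lemma contr_in l m F G D : In F G -> seqS l m (F :: G) D -> seqS l m G D.
Proof.
  intros HF H. destruct (perm_in_split F G HF) as [G1 HG1].
  assert (H1 : seqS l m (F :: F :: G1) D) by (eapply seqS_perm; [exact H|apply perm_skip; auto|apply Permutation_refl]).
  apply contrL in H1. eapply seqS_perm; [exact H1|apply Permutation_sym; auto|apply Permutation_refl].
Qed.

Lemma inert_tac_helper : True. Proof. exact I. Qed.

Lemma inertR_InN a y : inertR (InN a y). Proof. intros l0 m0 Lc Rc NL NR Ps ew en Hr; destruct Hr; simpl; split; intro Hin; repeat destruct Hin as [Hin|Hin]; try contradiction; try discriminate; subst; simpl in *; try contradiction. Qed.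
Lemma inertR_InW y a : inertR (InW y a). Proof. intros l0 m0 Lc Rc NL NR Ps ew en Hr; destruct Hr; simpl; split; intro Hin; repeat destruct Hin as [Hin|Hin]; try contradiction; try discriminate; subst; simpl in *; try contradiction. Qed.
Lemma inertR_Sub a b : inertR (Sub a b). Proof. intros l0 m0 Lc Rc NL NR Ps ew en Hr; destruct Hr; simpl; split; intro Hin; repeat destruct Hin as [Hin|Hin]; try contradiction; try discriminate; subst; simpl in *; try contradiction. Qed.
Lemma inertR_Bot y : inertR (LF y Bot). Proof. intros l0 m0 Lc Rc NL NR Ps ew en Hr; destruct Hr; simpl; split; intro Hin; repeat destruct Hin as [Hin|Hin]; try contradiction; try discriminate; subst; simpl in *; try contradiction. Qed.

Lemma cut_step l m F : (forall F', weight F' < weight F -> CutF l m F') -> CutF l m F.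
Proof.
  intros IHc G D H1 H2.
  assert (Hinert : inertR F -> seqS l m G D).
  { intro Hi. eapply inertR_elim; [exact Hi|exact H1|apply Permutation_refl]. }
  destruct F as [a y | y a | a b | y A | a A | a A | y a A B].
  - apply Hinert, inertR_InN.
  - apply Hinert, inertR_InW.
  - apply Hinert, inertR_Sub.
  - destruct A as [p| |A B|A B|A B|A B].
    +
      eapply (permR l m (LF y (Var p))); [| |exact H1|apply Permutation_refl|exact H2].
      * intros Lc Rc NL NR Ps ew en Hr HF. destruct Hr; simpl in HF; try contradiction;
          destruct HF as [HF|[]]; try discriminate; subst; simpl in *; auto; contradiction.
      * intros NL NR Ps ew en G0 D2 Hr HF. exfalso. inversion Hr; subst; simpl in HF;
          repeat destruct HF as [HF|HF]; try discriminate; contradiction.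
    + apply Hinert, inertR_Bot.
    +
      pose proof (invAndR1 l m _ _ _ _ _ H1) as Ha. pose proof (invAndR2 l m _ _ _ _ _ H1) as Hb.
      pose proof (invAndL l m _ _ _ _ _ H2) as Hab.
      assert (HA : seqS l m (LF y A :: G) D).
      { apply (IHc (LF y B)); [simpl; lia| |].
        - apply (wk l m _ _ _ _ [LF y A] [] Hb); perm.
        - eapply seqS_perm; [exact Hab|perm|apply Permutation_refl]. }
      apply (IHc (LF y A)); [simpl; lia|exact Ha|exact HA].
    +
      pose proof (invOrR l m _ _ _ _ _ H1) as Hab.
      pose proof (invOrL1 l m _ _ _ _ _ H2) as Ha. pose proof (invOrL2 l m _ _ _ _ _ H2) as Hb.
      assert (HB : seqS l m G (LF y B :: D)).
      { apply (IHc (LF y A)); [simpl; lia|exact Hab|].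
        apply (wk l m _ _ _ _ [] [LF y B] Ha); perm. }
      apply (IHc (LF y B)); [simpl; lia|exact HB|exact Hb].
    +
      pose proof (invImpR l m _ _ _ _ _ H1) as Hab.
      pose proof (invImpL1 l m _ _ _ _ _ H2) as Ha. pose proof (invImpL2 l m _ _ _ _ _ H2) as Hb.
      assert (HA : seqS l m (LF y A :: G) D).
      { apply (IHc (LF y B)); [simpl; lia|exact Hab|].
        apply (wk l m _ _ _ _ [LF y A] [] Hb); perm. }
      apply (IHc (LF y A)); [simpl; lia|exact Ha|exact HA].
    +
      eapply (permL l m (LF y (Cond A B))); [| |exact H2|apply Permutation_refl|exact H1].
      * intros Lc Rc NL NR Ps ew en Hr HF. destruct Hr; simpl in HF; try contradiction;
          destruct HF as [HF|[]]; try discriminate; subst; simpl in *; auto; contradiction.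
      * intros NL NR Ps ew en G2 D0 Hr HF HNL HNR Hp HD1.
        inversion Hr; subst; simpl in HF; repeat destruct HF as [HF|HF]; try discriminate; try contradiction; try (destruct t; discriminate).
        inversion HF; subst.
        assert (HaG : In (InN a y) G2).
        { destruct (HNL (InN a y) (or_introl eq_refl)) as [E|E]; [discriminate|auto]. }
        pose proof (Hp [] [Ex a A] (or_introl eq_refl)) as P1. simpl in P1.
        pose proof (Hp [Cnd y a A B] [] (or_intror (or_introl eq_refl))) as P2. simpl in P2.
        pose proof (invCond l m _ _ _ _ _ HD1 a) as H3.
        assert (H4 : seqS l m (InN a y :: Ex a A :: G2) D0).
        { apply (IHc (Cnd y a A B)); [simpl; lia|exact H3|].
          apply (wk l m _ _ _ _ [InN a y; Ex a A] [] P2); perm. }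
        assert (H5 : seqS l m (InN a y :: G2) D0).
        { apply (IHc (Ex a A)); [simpl; lia| |].
          - apply (wk l m _ _ _ _ [InN a y] [] P1); perm.
          - eapply seqS_perm; [exact H4|perm|apply Permutation_refl]. }
        apply (contr_in l m (InN a y)); auto.
  -
    eapply (permR l m (Ex a A)); [| |exact H1|apply Permutation_refl|exact H2].
    + intros Lc Rc NL NR Ps ew en Hr HF. destruct Hr; simpl in HF; try contradiction;
        destruct HF as [HF|[]]; try discriminate; subst; simpl in *; auto; contradiction.
    + intros NL NR Ps ew en G0 D2 Hr HF HNL HNR Hp HD2.
      inversion Hr; subst; simpl in HF; repeat destruct HF as [HF|HF]; try discriminate; try contradiction; try (destruct t; discriminate).
      inversion HF; subst.
      pose proof (Hp [] [LF x A] (or_introl eq_refl)) as P1. simpl in P1.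
      pose proof (invEx l m _ _ _ _ HD2 x) as H3.
      assert (H4 : seqS l m (InW x a :: G0) D2).
      { apply (IHc (LF x A)); [simpl; lia| |].
        - apply (wk l m _ _ _ _ [InW x a] [] P1); perm.
        - eapply seqS_perm; [exact H3|perm|apply Permutation_refl]. }
      apply (contr_in l m (InW x a)); auto. apply HNL; left; auto.
  -
    eapply (permL l m (All a A)); [| |exact H2|apply Permutation_refl|exact H1].
    + intros Lc Rc NL NR Ps ew en Hr HF. destruct Hr; simpl in HF; try contradiction;
        destruct HF as [HF|[]]; try discriminate; subst; simpl in *; auto; contradiction.
    + intros NL NR Ps ew en G2 D0 Hr HF HNL HNR Hp HD1.
      inversion Hr; subst; simpl in HF; repeat destruct HF as [HF|HF]; try discriminate; try contradiction; try (destruct t; discriminate).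
      inversion HF; subst.
      assert (HaG : In (InW x a) G2).
      { destruct (HNL (InW x a) (or_introl eq_refl)) as [E|E]; [discriminate|auto]. }
      pose proof (Hp [LF x A] [] (or_introl eq_refl)) as P1. simpl in P1.
      pose proof (invAll l m _ _ _ _ HD1 x) as H3.
      assert (H4 : seqS l m (InW x a :: G2) D0).
      { apply (IHc (LF x A)); [simpl; lia|exact H3|].
        apply (wk l m _ _ _ _ [InW x a] [] P1); perm. }
      apply (contr_in l m (InW x a)); auto.
  -
    eapply (permR l m (Cnd y a A B)); [| |exact H1|apply Permutation_refl|exact H2].
    + intros Lc Rc NL NR Ps ew en Hr HF. destruct Hr; simpl in HF; try contradiction;
        destruct HF as [HF|[]]; try discriminate; subst; simpl in *; auto; contradiction.
    + intros NL NR Ps ew en G0 D2 Hr HF HNL HNR Hp HD2.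
      inversion Hr; subst; simpl in HF; repeat destruct HF as [HF|HF]; try discriminate; try contradiction; try (destruct t; discriminate).
      inversion HF; subst.
      pose proof (Hp [] [Ex c A] (or_introl eq_refl)) as P1. simpl in P1.
      pose proof (Hp [] [All c (Imp A B)] (or_intror (or_introl eq_refl))) as P2. simpl in P2.
      pose proof (invCnd l m _ _ _ _ _ _ HD2 c) as H3.
      assert (H4 : seqS l m (InN c y :: Sub c a :: Ex c A :: G0) D2).
      { apply (IHc (All c (Imp A B))); [simpl; lia| |].
        - apply (wk l m _ _ _ _ [InN c y; Sub c a; Ex c A] [] P2); perm.
        - eapply seqS_perm; [exact H3|perm|apply Permutation_refl]. }
      assert (H5 : seqS l m (InN c y :: Sub c a :: G0) D2).
      { apply (IHc (Ex c A)); [simpl; lia| |].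
        - apply (wk l m _ _ _ _ [InN c y; Sub c a] [] P1); perm.
        - eapply seqS_perm; [exact H4|perm|apply Permutation_refl]. }
      apply (contr_in l m (InN c y)); [apply HNL; left; auto|].
      apply (contr_in l m (Sub c a)); [right; apply HNL; right; left; auto|].
      eapply seqS_perm; [exact H5|perm|apply Permutation_refl].
Qed.

Theorem cut l m F : CutF l m F.
Proof.
  assert (H : forall n F, weight F < n -> CutF l m F).
  { induction n; intros F0 HF0; [lia|]. apply cut_step. intros F' HF'. apply IHn. lia. }
  apply (H (S (weight F))). lia.
Qed.

Section Rules.
Variables (l : level) (m : modext).

Lemma sInst NL NR Ps ew en G D : rinst l m [] [] NL NR Ps ew en -> incl NL G -> incl NR D ->
  (forall y, ew = Some y -> ~ In y (wls (G ++ D))) -> (forall n, en = Some n -> ~ In n (nls (G ++ D))) ->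
  (forall Lp Rp, In (Lp, Rp) Ps -> seqS l m (Lp ++ G) (Rp ++ D)) -> seqS l m G D.
Proof. intros. eapply SS; eauto; apply Permutation_refl. Qed.

Lemma sInvL P y k G D : isInvL P -> ~ In y (wls ((P :: G) ++ D)) -> ~ In k (nls ((P :: G) ++ D)) ->
  (forall Lp Rp, In (Lp, Rp) (compL P y k) -> seqS l m (Lp ++ G) (Rp ++ D)) -> seqS l m (P :: G) D.
Proof.
  intros HP Hy Hk H. eapply SS with (G0 := G) (D0 := D); [apply (RI_invL l m P y k HP)|apply Permutation_refl|apply Permutation_refl|
   apply incl_nil_l|apply incl_nil_l| | |exact H].
  - intros y0 E; inversion E; subst; auto.
  - intros y0 E; inversion E; subst; auto.
Qed.
Lemma sInvR P y k G D : isInvR P -> ~ In y (wls (G ++ P :: D)) -> ~ In k (nls (G ++ P :: D)) ->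
  (forall Lp Rp, In (Lp, Rp) (compR P y k) -> seqS l m (Lp ++ G) (Rp ++ D)) -> seqS l m G (P :: D).
Proof.
  intros HP Hy Hk H. eapply SS with (G0 := G) (D0 := D); [apply (RI_invR l m P y k HP)|apply Permutation_refl|apply Permutation_refl|
   apply incl_nil_l|apply incl_nil_l| | |exact H].
  - intros y0 E; inversion E; subst; auto.
  - intros y0 E; inversion E; subst; auto.
Qed.

Ltac fs_ := first [apply freshW_ok, incl_refl | apply freshN_ok, incl_refl].

Lemma sInit x p G D : seqS l m (LF x (Var p) :: G) (LF x (Var p) :: D).
Proof. eapply SS with (G0 := G) (D0 := D); [apply RI_init|apply Permutation_refl|apply Permutation_refl|apply incl_nil_l|apply incl_nil_l|intros; discriminate|intros; discriminate|intros ? ? []]. Qed.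
Lemma sBot x G D : seqS l m (LF x Bot :: G) D.
Proof. eapply SS with (G0 := G) (D0 := D); [apply RI_bot|apply Permutation_refl|apply Permutation_refl|apply incl_nil_l|apply incl_nil_l|intros; discriminate|intros; discriminate|intros ? ? []]. Qed.

Lemma sAndL x A B G D : seqS l m (LF x A :: LF x B :: G) D -> seqS l m (LF x (And A B) :: G) D.
Proof. intro H. set (L := (LF x (And A B) :: G) ++ D). apply (sInvL _ (freshW L) (freshN L)); [exact I|fs_|fs_|].
  intros Lp Rp [E|[]]; inversion E; subst; exact H. Qed.
Lemma sOrL x A B G D : seqS l m (LF x A :: G) D -> seqS l m (LF x B :: G) D -> seqS l m (LF x (Or A B) :: G) D.
Proof. intros H1 H2. set (L := (LF x (Or A B) :: G) ++ D). apply (sInvL _ (freshW L) (freshN L)); [exact I|fs_|fs_|].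
  intros Lp Rp [E|[E|[]]]; inversion E; subst; auto. Qed.
Lemma sImpL x A B G D : seqS l m G (LF x A :: D) -> seqS l m (LF x B :: G) D -> seqS l m (LF x (Imp A B) :: G) D.
Proof. intros H1 H2. set (L := (LF x (Imp A B) :: G) ++ D). apply (sInvL _ (freshW L) (freshN L)); [exact I|fs_|fs_|].
  intros Lp Rp [E|[E|[]]]; inversion E; subst; auto. Qed.
Lemma sAndR x A B G D : seqS l m G (LF x A :: D) -> seqS l m G (LF x B :: D) -> seqS l m G (LF x (And A B) :: D).
Proof. intros H1 H2. set (L := G ++ LF x (And A B) :: D). apply (sInvR _ (freshW L) (freshN L)); [exact I|fs_|fs_|].
  intros Lp Rp [E|[E|[]]]; inversion E; subst; auto. Qed.
Lemma sOrR x A B G D : seqS l m G (LF x A :: LF x B :: D) -> seqS l m G (LF x (Or A B) :: D).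
Proof. intro H. set (L := G ++ LF x (Or A B) :: D). apply (sInvR _ (freshW L) (freshN L)); [exact I|fs_|fs_|].
  intros Lp Rp [E|[]]; inversion E; subst; auto. Qed.
Lemma sImpR x A B G D : seqS l m (LF x A :: G) (LF x B :: D) -> seqS l m G (LF x (Imp A B) :: D).
Proof. intro H. set (L := G ++ LF x (Imp A B) :: D). apply (sInvR _ (freshW L) (freshN L)); [exact I|fs_|fs_|].
  intros Lp Rp [E|[]]; inversion E; subst; auto. Qed.
Lemma sLEx y a A G D : ~ In y (wls ((Ex a A :: G) ++ D)) -> seqS l m (InW y a :: LF y A :: G) D -> seqS l m (Ex a A :: G) D.
Proof. intros Hy H. set (L := (Ex a A :: G) ++ D). apply (sInvL _ y (freshN L)); [exact I|auto|fs_|].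
  intros Lp Rp [E|[]]; inversion E; subst; auto. Qed.
Lemma sLBar n x a A B G D : ~ In n (nls ((Cnd x a A B :: G) ++ D)) ->
  seqS l m (InN (NV n) x :: Sub (NV n) a :: Ex (NV n) A :: All (NV n) (Imp A B) :: G) D -> seqS l m (Cnd x a A B :: G) D.
Proof. intros Hy H. set (L := (Cnd x a A B :: G) ++ D). apply (sInvL _ (freshW L) n); [exact I|fs_|auto|].
  intros Lp Rp [E|[]]; inversion E; subst; auto. Qed.
Lemma sRCond n x A B G D : ~ In n (nls (G ++ LF x (Cond A B) :: D)) ->
  seqS l m (InN (NV n) x :: Ex (NV n) A :: G) (Cnd x (NV n) A B :: D) -> seqS l m G (LF x (Cond A B) :: D).
Proof. intros Hy H. set (L := G ++ LF x (Cond A B) :: D). apply (sInvR _ (freshW L) n); [exact I|fs_|auto|].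
  intros Lp Rp [E|[]]; inversion E; subst; auto. Qed.
Lemma sRAll y a A G D : ~ In y (wls (G ++ All a A :: D)) -> seqS l m (InW y a :: G) (LF y A :: D) -> seqS l m G (All a A :: D).
Proof. intros Hy H. set (L := G ++ All a A :: D). apply (sInvR _ y (freshN L)); [exact I|auto|fs_|].
  intros Lp Rp [E|[]]; inversion E; subst; auto. Qed.

Ltac prem := intros ? ? [E|[]]; inversion E; subst; simpl; auto.
Ltac prem2 := intros ? ? [E|[E|[]]]; inversion E; subst; simpl; auto.
Ltac inc := let z := fresh in let Hz := fresh in intros z Hz; simpl in Hz; repeat destruct Hz as [<-|Hz]; try contradiction; auto.
Ltac noe := intros ? E; discriminate E.

Lemma sLAll x a A G D : In (InW x a) G -> In (All a A) G -> seqS l m (LF x A :: G) D -> seqS l m G D.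
Proof. intros H1 H2 H. eapply sInst; [apply (RI_LAll l m x a A)|inc|inc|noe|noe|prem]. Qed.
Lemma sREx x a A G D : In (InW x a) G -> In (Ex a A) D -> seqS l m G (LF x A :: D) -> seqS l m G D.
Proof. intros H1 H2 H. eapply sInst; [apply (RI_REx l m x a A)|inc|inc|noe|noe|prem]. Qed.
Lemma sLCond a x A B G D : In (InN a x) G -> In (LF x (Cond A B)) G -> seqS l m G (Ex a A :: D) ->
  seqS l m (Cnd x a A B :: G) D -> seqS l m G D.
Proof. intros H1 H2 H3 H4. eapply sInst; [apply (RI_LCond l m a x A B)|inc|inc|noe|noe|prem2]. Qed.
Lemma sRBar c a x A B G D : In (InN c x) G -> In (Sub c a) G -> In (Cnd x a A B) D ->
  seqS l m G (Ex c A :: D) -> seqS l m G (All c (Imp A B) :: D) -> seqS l m G D.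
Proof. intros H1 H2 H3 H4 H5. eapply sInst; [apply (RI_RBar l m c a x A B)|inc|inc|noe|noe|prem2]. Qed.
Lemma sRef a G D : seqS l m (Sub a a :: G) D -> seqS l m G D.
Proof. intros H. eapply sInst; [apply (RI_Ref l m a)|inc|inc|noe|noe|prem]. Qed.
Lemma sTr a b c G D : In (Sub c b) G -> In (Sub b a) G -> seqS l m (Sub c a :: G) D -> seqS l m G D.
Proof. intros H1 H2 H. eapply sInst; [apply (RI_Tr l m a b c)|inc|inc|noe|noe|prem]. Qed.
Lemma sLSub x a b G D : In (InW x a) G -> In (Sub a b) G -> seqS l m (InW x b :: G) D -> seqS l m G D.
Proof. intros H1 H2 H. eapply sInst; [apply (RI_LSub l m x a b)|inc|inc|noe|noe|prem]. Qed.
Lemma sN n x G D : hasN l -> ~ In n (nls (G ++ D)) -> seqS l m (InN (NV n) x :: G) D -> seqS l m G D.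
Proof. intros Hl Hn H. eapply sInst; [apply (RI_N l m n x); auto|inc|inc|noe| |prem]. intros ? E; inversion E; subst; auto. Qed.
Lemma s0 y a x G D : hasN l -> In (InN a x) G -> ~ In y (wls (G ++ D)) -> seqS l m (InW y a :: G) D -> seqS l m G D.
Proof. intros Hl H1 Hn H. eapply sInst; [apply (RI_0 l m y a x); auto|inc|inc| |noe|prem]. intros ? E; inversion E; subst; auto. Qed.
Lemma sT n x G D : hasT l -> ~ In n (nls (G ++ D)) -> seqS l m (InW x (NV n) :: InN (NV n) x :: G) D -> seqS l m G D.
Proof. intros Hl Hn H. eapply sInst; [apply (RI_T l m n x); auto|inc|inc|noe| |prem]. intros ? E; inversion E; subst; auto. Qed.
Lemma sW a x G D : hasW l -> In (InN a x) G -> seqS l m (InW x a :: G) D -> seqS l m G D.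
Proof. intros Hl H1 H. eapply sInst; [apply (RI_W l m a x); auto|inc|inc|noe|noe|prem]. Qed.
Lemma sSingle x G D : hasC l -> In (InN (NS x) x) G -> seqS l m (InW x (NS x) :: G) D -> seqS l m G D.
Proof. intros Hl H1 H. eapply sInst; [apply (RI_Single l m x); auto|inc|inc|noe|noe|prem]. Qed.
Lemma sC a x G D : hasC l -> In (InN a x) G -> seqS l m (InN (NS x) x :: Sub (NS x) a :: G) D -> seqS l m G D.
Proof. intros Hl H1 H. eapply sInst; [apply (RI_C l m a x); auto|inc|inc|noe|noe|prem]. Qed.
Lemma sRepl1 t x y G D : hasC l -> In (InW y (NS x)) G -> In (instAt t x) G -> seqS l m (instAt t y :: G) D -> seqS l m G D.
Proof. intros Hl H1 H2 H. eapply sInst; [apply (RI_Repl1 l m t x y); auto|inc|inc|noe|noe|prem]. Qed.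
Lemma sRepl2 t x y G D : hasC l -> InW y (NS x) <> instAt t y -> In (InW y (NS x)) G -> In (instAt t y) G ->
  seqS l m (instAt t x :: G) D -> seqS l m G D.
Proof. intros Hl Hne H1 H2 H. eapply sInst; [apply (RI_Repl2 l m t x y); auto|inc|inc|noe|noe|prem]. Qed.
Lemma sU1 n a b x y z G D : m = MU -> In (InN a x) G -> In (InW y a) G -> In (InN b y) G -> In (InW z b) G ->
  ~ In n (nls (G ++ D)) -> seqS l m (InW z (NV n) :: InN (NV n) x :: G) D -> seqS l m G D.
Proof. intros Hm H1 H2 H3 H4 Hn H. eapply sInst; [apply (RI_U1 l m n a b x y z); auto|inc|inc|noe| |prem]. intros ? E; inversion E; subst; auto. Qed.
Lemma sU2 n a b x y z G D : m = MU -> In (InN a x) G -> In (InW y a) G -> In (InN b x) G -> In (InW z b) G ->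
  ~ In n (nls (G ++ D)) -> seqS l m (InW z (NV n) :: InN (NV n) y :: G) D -> seqS l m G D.
Proof. intros Hm H1 H2 H3 H4 Hn H. eapply sInst; [apply (RI_U2 l m n a b x y z); auto|inc|inc|noe| |prem]. intros ? E; inversion E; subst; auto. Qed.
Lemma sA1 a b x y G D : m = MA -> In (InN a x) G -> In (InW y a) G -> In (InN b x) G -> seqS l m (InN b y :: G) D -> seqS l m G D.
Proof. intros Hm H1 H2 H3 H. eapply sInst; [apply (RI_A1 l m a b x y); auto|inc|inc|noe|noe|prem]. Qed.
Lemma sA2 a b x y G D : m = MA -> In (InN a x) G -> In (InW y a) G -> In (InN b y) G -> seqS l m (InN b x :: G) D -> seqS l m G D.
Proof. intros Hm H1 H2 H3 H. eapply sInst; [apply (RI_A2 l m a b x y); auto|inc|inc|noe|noe|prem]. Qed.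

Lemma kL P G D : In P G -> seqS l m (P :: G) D -> seqS l m G D.
Proof. apply contr_in. Qed.
Lemma contr_inR F G D : In F D -> seqS l m G (F :: D) -> seqS l m G D.
Proof.
  intros HF H. destruct (perm_in_split F D HF) as [D1 HD1].
  assert (H1 : seqS l m G (F :: F :: D1)) by (eapply seqS_perm; [exact H|apply Permutation_refl|apply perm_skip; auto]).
  apply contrR in H1. eapply seqS_perm; [exact H1|apply Permutation_refl|apply Permutation_sym; auto].
Qed.
Lemma kR P G D : In P D -> seqS l m G (P :: D) -> seqS l m G D.
Proof. apply contr_inR. Qed.

Lemma kInit x p G D : In (LF x (Var p)) G -> In (LF x (Var p)) D -> seqS l m G D.
Proof.
  intros H1 H2. destruct (perm_in_split _ G H1) as [G1 HG1]. destruct (perm_in_split _ D H2) as [D1 HD1].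
  eapply seqS_perm; [apply (sInit x p G1 D1)|apply Permutation_sym; auto|apply Permutation_sym; auto].
Qed.
Lemma kBot x G D : In (LF x Bot) G -> seqS l m G D.
Proof. intros H1. apply (kL _ _ _ H1), sBot. Qed.

End Rules.

Section K.
Variables (l : level) (m : modext).

Lemma fr_consL y P G D : In P G -> ~ In y (wls (G ++ D)) -> ~ In y (wls ((P :: G) ++ D)).
Proof. intros HP H. eapply notin_wls_incl; [|exact H]. intros z Hz. simpl in Hz. rewrite in_app_iff in *. simpl in Hz. intuition (subst; auto). Qed.
Lemma frn_consL y P G D : In P G -> ~ In y (nls (G ++ D)) -> ~ In y (nls ((P :: G) ++ D)).
Proof. intros HP H. eapply notin_nls_incl; [|exact H]. intros z Hz. simpl in Hz. rewrite in_app_iff in *. simpl in Hz. intuition (subst; auto). Qed.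
Lemma fr_consR y P G D : In P D -> ~ In y (wls (G ++ D)) -> ~ In y (wls (G ++ P :: D)).
Proof. intros HP H. eapply notin_wls_incl; [|exact H]. intros z Hz. rewrite in_app_iff in *. simpl in Hz. intuition (subst; auto). Qed.
Lemma frn_consR y P G D : In P D -> ~ In y (nls (G ++ D)) -> ~ In y (nls (G ++ P :: D)).
Proof. intros HP H. eapply notin_nls_incl; [|exact H]. intros z Hz. rewrite in_app_iff in *. simpl in Hz. intuition (subst; auto). Qed.

Lemma kAndL x A B G D : In (LF x (And A B)) G -> seqS l m (LF x A :: LF x B :: G) D -> seqS l m G D.
Proof. intros H1 H. apply (kL l m _ _ _ H1). apply sAndL, H. Qed.
Lemma kOrL x A B G D : In (LF x (Or A B)) G -> seqS l m (LF x A :: G) D -> seqS l m (LF x B :: G) D -> seqS l m G D.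
Proof. intros H1 H H'. apply (kL l m _ _ _ H1). apply sOrL; auto. Qed.
Lemma kImpL x A B G D : In (LF x (Imp A B)) G -> seqS l m G (LF x A :: D) -> seqS l m (LF x B :: G) D -> seqS l m G D.
Proof. intros H1 H H'. apply (kL l m _ _ _ H1). apply sImpL; auto. Qed.
Lemma kAndR x A B G D : In (LF x (And A B)) D -> seqS l m G (LF x A :: D) -> seqS l m G (LF x B :: D) -> seqS l m G D.
Proof. intros H1 H H'. apply (kR l m _ _ _ H1). apply sAndR; auto. Qed.
Lemma kOrR x A B G D : In (LF x (Or A B)) D -> seqS l m G (LF x A :: LF x B :: D) -> seqS l m G D.
Proof. intros H1 H. apply (kR l m _ _ _ H1). apply sOrR; auto. Qed.
Lemma kImpR x A B G D : In (LF x (Imp A B)) D -> seqS l m (LF x A :: G) (LF x B :: D) -> seqS l m G D.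
Proof. intros H1 H. apply (kR l m _ _ _ H1). apply sImpR; auto. Qed.
Lemma kLEx y a A G D : In (Ex a A) G -> ~ In y (wls (G ++ D)) -> seqS l m (InW y a :: LF y A :: G) D -> seqS l m G D.
Proof. intros H1 Hy H. apply (kL l m _ _ _ H1). apply (sLEx l m y); auto. apply fr_consL; auto. Qed.
Lemma kLBar n x a A B G D : In (Cnd x a A B) G -> ~ In n (nls (G ++ D)) ->
  seqS l m (InN (NV n) x :: Sub (NV n) a :: Ex (NV n) A :: All (NV n) (Imp A B) :: G) D -> seqS l m G D.
Proof. intros H1 Hy H. apply (kL l m _ _ _ H1). apply (sLBar l m n); auto. apply frn_consL; auto. Qed.
Lemma kRCond n x A B G D : In (LF x (Cond A B)) D -> ~ In n (nls (G ++ D)) ->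
  seqS l m (InN (NV n) x :: Ex (NV n) A :: G) (Cnd x (NV n) A B :: D) -> seqS l m G D.
Proof. intros H1 Hy H. apply (kR l m _ _ _ H1). apply (sRCond l m n); auto. apply frn_consR; auto. Qed.
Lemma kRAll y a A G D : In (All a A) D -> ~ In y (wls (G ++ D)) -> seqS l m (InW y a :: G) (LF y A :: D) -> seqS l m G D.
Proof. intros H1 Hy H. apply (kR l m _ _ _ H1). apply (sRAll l m y); auto. apply fr_consR; auto. Qed.

Definition IdF (A : form) := forall x G D, In (LF x A) G -> In (LF x A) D -> seqS l m G D.

Ltac fW G D := pose proof (freshW_ok (G ++ D) (G ++ D) (incl_refl _)).
Ltac fN G D := pose proof (freshN_ok (G ++ D) (G ++ D) (incl_refl _)).

Lemma idEx A : IdF A -> forall a G D, In (Ex a A) G -> In (Ex a A) D -> seqS l m G D.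
Proof.
  intros HA a G D H1 H2. set (y := freshW (G ++ D)).
  apply (kLEx y a A G D H1); [apply freshW_ok, incl_refl|].
  apply (sREx l m y a A); [left; auto|auto|]. apply (HA y); simpl; auto.
Qed.
Lemma idAll A : IdF A -> forall a G D, In (All a A) G -> In (All a A) D -> seqS l m G D.
Proof.
  intros HA a G D H1 H2. set (y := freshW (G ++ D)).
  apply (kRAll y a A G D H2); [apply freshW_ok, incl_refl|].
  apply (sLAll l m y a A); [left; auto|right; auto|]. apply (HA y); simpl; auto.
Qed.
Lemma idImp A B : IdF A -> IdF B -> IdF (Imp A B).
Proof.
  intros HA HB x G D H1 H2. apply (kImpR x A B G D H2). apply (kImpL x A B); [right; auto| |].
  - apply (HA x); simpl; auto.
  - apply (HB x); simpl; auto.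
Qed.
Lemma idCnd A B : IdF A -> IdF B -> forall x a G D, In (Cnd x a A B) G -> In (Cnd x a A B) D -> seqS l m G D.
Proof.
  intros HA HB x a G D H1 H2. set (n := freshN (G ++ D)).
  apply (kLBar n x a A B G D H1); [apply freshN_ok, incl_refl|].
  apply (sRBar l m (NV n) a x A B); [simpl; auto|simpl; auto|auto| |].
  - apply (idEx A HA (NV n)); simpl; auto.
  - apply (idAll (Imp A B) (idImp A B HA HB) (NV n)); simpl; auto.
Qed.

Theorem identity A : IdF A.
Proof.
  induction A as [p| |A IHA B IHB|A IHA B IHB|A IHA B IHB|A IHA B IHB]; intros x G D H1 H2.
  - eapply kInit; eauto.
  - eapply kBot; eauto.
  - apply (kAndL x A B G D H1). apply (kAndR x A B); auto; [apply (IHA x)|apply (IHB x)]; simpl; auto.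
  - apply (kOrR x A B G D H2). apply (kOrL x A B); auto; [apply (IHA x)|apply (IHB x)]; simpl; auto.
  - apply (idImp A B IHA IHB x); auto.
  - set (n := freshN (G ++ D)).
    apply (kRCond n x A B G D H2); [apply freshN_ok, incl_refl|].
    apply (sLCond l m (NV n) x A B); [simpl; auto|simpl; auto| |].
    + apply (idEx A IHA (NV n)); simpl; auto.
    + apply (idCnd A B IHA IHB x (NV n)); simpl; auto.
Qed.

Lemma idL x A G D : In (LF x A) D -> seqS l m (LF x A :: G) D.
Proof. intro H. apply (identity A x); simpl; auto. Qed.

End K.

Definition isComp (A : form) : bool := match A with And _ _ | Or _ _ | Imp _ _ => true | _ => false end.
Definition sz (L : list form) : nat := list_sum (map fs L).

Lemma sz_perm L1 L2 : Permutation L1 L2 -> sz L1 = sz L2.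
Proof. induction 1; unfold sz in *; simpl in *; lia. Qed.
Lemma sz_cons A L : sz (A :: L) = fs A + sz L.
Proof. reflexivity. Qed.

Lemma taut_gen l m x : forall n Ls Rs, sz Ls + sz Rs < n ->
  (forall v, (forall A, In A Ls -> beval v A = true) -> exists B, In B Rs /\ beval v B = true) ->
  seqS l m (map (LF x) Ls) (map (LF x) Rs).
Proof.
  induction n as [|n IH]; intros Ls Rs Hsz Hv; [lia|].
  destruct (existsb isComp Ls) eqn:EL.
  - apply existsb_exists in EL. destruct EL as [C [HC HCc]].
    destruct (perm_in_split C Ls HC) as [Ls' HLs].
    assert (Hs : sz Ls = fs C + sz Ls') by (rewrite (sz_perm _ _ HLs); reflexivity).
    apply (seqS_perm l m (map (LF x) (C :: Ls')) (map (LF x) Rs)); [|apply Permutation_map, Permutation_sym; auto|apply Permutation_refl].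
    assert (HvL : forall v, (forall A, In A (C :: Ls') -> beval v A = true) -> exists B, In B Rs /\ beval v B = true).
    { intros v Hall. apply Hv. intros A HA. apply Hall. eapply perm_sub'; [exact HLs|auto]. }
    destruct C as [p| |A B|A B|A B|A B]; simpl in HCc; try discriminate; simpl.
    + apply sAndL. apply (IH (A :: B :: Ls') Rs); [unfold sz in *; simpl in *; lia|].
      intros v Hall. apply HvL. intros D [<-|HD]; [simpl; rewrite (Hall A), (Hall B); simpl; auto|apply Hall; simpl; auto].
    + apply sOrL.
      * apply (IH (A :: Ls') Rs); [unfold sz in *; simpl in *; lia|].
        intros v Hall. apply HvL. intros D [<-|HD]; [simpl; rewrite (Hall A); simpl; auto|apply Hall; simpl; auto].
      * apply (IH (B :: Ls') Rs); [unfold sz in *; simpl in *; lia|].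
        intros v Hall. apply HvL. intros D [<-|HD]; [simpl; rewrite (Hall B); simpl; auto; apply orb_true_r|apply Hall; simpl; auto].
    + apply sImpL.
      * apply (IH Ls' (A :: Rs)); [unfold sz in *; simpl in *; lia|].
        intros v Hall. destruct (beval v A) eqn:EA; [exists A; simpl; auto|].
        destruct (HvL v) as [B0 [HB0 HB0v]]; [|exists B0; simpl; auto].
        intros D [<-|HD]; [simpl; rewrite EA; auto|auto].
      * apply (IH (B :: Ls') Rs); [unfold sz in *; simpl in *; lia|].
        intros v Hall. apply HvL. intros D [<-|HD]; [simpl; rewrite (Hall B); [destruct (beval v A); auto|simpl; auto]|apply Hall; simpl; auto].
  - destruct (existsb isComp Rs) eqn:ER.
    + apply existsb_exists in ER. destruct ER as [C [HC HCc]].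
      destruct (perm_in_split C Rs HC) as [Rs' HRs].
      assert (Hs : sz Rs = fs C + sz Rs') by (rewrite (sz_perm _ _ HRs); reflexivity).
      apply (seqS_perm l m (map (LF x) Ls) (map (LF x) (C :: Rs'))); [|apply Permutation_refl|apply Permutation_map, Permutation_sym; auto].
      assert (HvR : forall v, (forall A, In A Ls -> beval v A = true) -> exists B, In B (C :: Rs') /\ beval v B = true).
      { intros v Hall. destruct (Hv v Hall) as [B [HB HBv]]. exists B; split; auto. eapply perm_sub'; [exact HRs|auto]. }
      destruct C as [p| |A B|A B|A B|A B]; simpl in HCc; try discriminate; simpl.
      * apply sAndR.
        -- apply (IH Ls (A :: Rs')); [unfold sz in *; simpl in *; lia|].
           intros v Hall. destruct (HvR v Hall) as [B0 [[<-|HB0] HB0v]]; [|exists B0; simpl; auto].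
           simpl in HB0v. apply andb_true_iff in HB0v. exists A; simpl; tauto.
        -- apply (IH Ls (B :: Rs')); [unfold sz in *; simpl in *; lia|].
           intros v Hall. destruct (HvR v Hall) as [B0 [[<-|HB0] HB0v]]; [|exists B0; simpl; auto].
           simpl in HB0v. apply andb_true_iff in HB0v. exists B; simpl; tauto.
      * apply sOrR.
        apply (IH Ls (A :: B :: Rs')); [unfold sz in *; simpl in *; lia|].
        intros v Hall. destruct (HvR v Hall) as [B0 [[<-|HB0] HB0v]]; [|exists B0; simpl; auto].
        simpl in HB0v. apply orb_true_iff in HB0v. destruct HB0v; [exists A|exists B]; simpl; auto.
      * apply sImpR.
        apply (IH (A :: Ls) (B :: Rs')); [unfold sz in *; simpl in *; lia|].
        intros v Hall. destruct (HvR v) as [B0 [[<-|HB0] HB0v]]; [intros; apply Hall; simpl; auto| |exists B0; simpl; auto].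
        simpl in HB0v. rewrite (Hall A) in HB0v; [|simpl; auto]. simpl in HB0v. exists B; simpl; auto.
    + assert (HLa : forall A, In A Ls -> isComp A = false).
      { intros A HA. destruct (isComp A) eqn:E; auto. assert (existsb isComp Ls = true) by (apply existsb_exists; eauto). congruence. }
      assert (HRa : forall A, In A Rs -> isComp A = false).
      { intros A HA. destruct (isComp A) eqn:E; auto. assert (existsb isComp Rs = true) by (apply existsb_exists; eauto). congruence. }
      destruct (in_dec form_eq_dec Bot Ls) as [HB|HB].
      * apply (kBot l m x). apply in_map_iff. eauto.
      * set (v := fun F => if in_dec form_eq_dec F Ls then true else false).
        destruct (Hv v) as [B [HB1 HB2]].
        -- intros A HA. pose proof (HLa A HA) as HAc. destruct A; simpl in HAc; try discriminate; simpl; unfold v;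
           try (destruct (in_dec form_eq_dec _ Ls); tauto). contradiction.
        -- pose proof (HRa B HB1) as HBc. destruct B; simpl in HBc; try discriminate; simpl in HB2; try discriminate;
           unfold v in HB2; destruct (in_dec form_eq_dec _ Ls) as [Hin|]; try discriminate;
           [apply (identity l m (Var n0) x)|apply (identity l m (Cond B1 B2) x)]; apply in_map_iff; eauto.
Qed.

Theorem taut_der l m A x : tautology A -> seqS l m [] [LF x A].
Proof.
  intro H. apply (taut_gen l m x (S (sz [] + sz [A])) [] [A]); [lia|].
  intros v _. exists A. split; [left; auto|apply H].
Qed.

Lemma contr_list_in l m L G D : incl L G -> seqS l m (L ++ G) D -> seqS l m G D.
Proof.
  induction L as [|a L IH]; intros HI H; simpl in *; auto.
  apply IH; [intros z Hz; apply HI; right; auto|].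
  apply (contr_in l m a); [apply in_or_app; right; apply HI; left; auto|exact H].
Qed.
Lemma contr_list_inR l m L G D : incl L D -> seqS l m G (L ++ D) -> seqS l m G D.
Proof.
  induction L as [|a L IH]; intros HI H; simpl in *; auto.
  apply IH; [intros z Hz; apply HI; right; auto|].
  apply (contr_inR l m a); [apply in_or_app; right; apply HI; left; auto|exact H].
Qed.

Lemma closure l m L R G D : seqS l m L R -> incl L G -> incl R D -> seqS l m G D.
Proof.
  intros H H1 H2. apply (contr_list_inR l m R); auto. apply (contr_list_in l m L); auto.
  apply seqS_weak, H.
Qed.

Lemma prop_close l m y Ls Rs G D : incl (map (LF y) Ls) G -> incl (map (LF y) Rs) D ->
  (forall v, implb (forallb (beval v) Ls) (existsb (beval v) Rs) = true) -> seqS l m G D.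
Proof.
  intros H1 H2 Hv. apply (closure l m (map (LF y) Ls) (map (LF y) Rs)); auto.
  apply (taut_gen l m y (S (sz Ls + sz Rs))); [lia|].
  intros v Hall. specialize (Hv v).
  assert (forallb (beval v) Ls = true) by (apply forallb_forall; auto).
  rewrite H in Hv. simpl in Hv. apply existsb_exists in Hv. auto.
Qed.

Ltac ino := simpl; repeat (first [left; reflexivity | right]).
Ltac incl_t := let z := fresh in let Hz := fresh in intros z Hz; simpl in Hz;
  repeat destruct Hz as [<-|Hz]; try contradiction; ino.
Ltac frs := simpl; lia.
Ltac bval := intro; simpl;
  repeat match goal with |- context [beval ?v ?X] => destruct (beval v X) end; reflexivity.
Ltac pc y Ls Rs := apply (prop_close _ _ y Ls Rs); [incl_t|incl_t|bval].

Ltac use1 IH x y := match goal with |- seqS _ _ ?G ?D => apply (proj1 (IH x y G D ltac:(simpl; auto 10))); simpl; auto 10 end.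
Ltac use2 IH x y := match goal with |- seqS _ _ ?G ?D => apply (proj2 (IH x y G D ltac:(simpl; auto 10))); simpl; auto 10 end.

Section Ax.
Variables (l : level) (m : modext).

Lemma ax_ID A x : seqS l m [] [LF x (Cond A A)].
Proof.
  apply (sRCond l m 0); [frs|].
  apply (sRef l m (NV 0)).
  apply (sRBar l m (NV 0) (NV 0) x A A); [ino|ino|ino| |].
  - apply (idEx l m A (identity l m A) (NV 0)); ino.
  - apply (sRAll l m (S x)); [frs|]. apply sImpR. apply idL; ino.
Qed.

Lemma ax_RAnd A B C x : seqS l m [] [LF x (Imp (And (Cond A B) (Cond A C)) (Cond A (And B C)))].
Proof.
  apply sImpR. apply sAndL.
  apply (sRCond l m 0); [frs|].
  apply (sLCond l m (NV 0) x A B); [ino|ino| |].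
  - apply (idEx l m A (identity l m A) (NV 0)); ino.
  - apply (sLBar l m 1); [frs|].
    apply (sLCond l m (NV 1) x A C); [ino|ino| |].
    + apply (idEx l m A (identity l m A) (NV 1)); ino.
    + apply (sLBar l m 2); [frs|].
      apply (sTr l m (NV 0) (NV 1) (NV 2)); [ino|ino|].
      apply (sRBar l m (NV 2) (NV 0) x A (And B C)); [ino|ino|ino| |].
      * apply (idEx l m A (identity l m A) (NV 2)); ino.
      * apply (sRAll l m (S x)); [frs|].
        apply (sLAll l m (S x) (NV 2) (Imp A C)); [ino|ino|].
        apply (sLSub l m (S x) (NV 2) (NV 1)); [ino|ino|].
        apply (sLAll l m (S x) (NV 1) (Imp A B)); [ino|ino|].
        pc (S x) [Imp A B; Imp A C] [Imp A (And B C)].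
Qed.

Lemma ax_CM A B C x : seqS l m [] [LF x (Imp (And (Cond A B) (Cond A C)) (Cond (And A B) C))].
Proof.
  apply sImpR. apply sAndL.
  apply (sRCond l m 0); [frs|].
  apply (sLCond l m (NV 0) x A B); [ino|ino| |].
  - apply (kLEx l m (S x) (NV 0) (And A B)); [ino|frs|].
    apply (sREx l m (S x) (NV 0) A); [ino|ino|].
    pc (S x) [And A B] [A].
  - apply (sLBar l m 1); [frs|].
    apply (sLCond l m (NV 1) x A C); [ino|ino| |].
    + apply (idEx l m A (identity l m A) (NV 1)); ino.
    + apply (sLBar l m 2); [frs|].
      apply (sTr l m (NV 0) (NV 1) (NV 2)); [ino|ino|].
      apply (sRBar l m (NV 2) (NV 0) x (And A B) C); [ino|ino|ino| |].
      * apply (kLEx l m (S x) (NV 2) A); [ino|frs|].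
        apply (sLSub l m (S x) (NV 2) (NV 1)); [ino|ino|].
        apply (sLAll l m (S x) (NV 1) (Imp A B)); [ino|ino|].
        apply (sREx l m (S x) (NV 2) (And A B)); [ino|ino|].
        pc (S x) [A; Imp A B] [And A B].
      * apply (sRAll l m (S x)); [frs|].
        apply (sLAll l m (S x) (NV 2) (Imp A C)); [ino|ino|].
        pc (S x) [Imp A C] [Imp (And A B) C].
Qed.

Lemma ax_OR A B C x : seqS l m [] [LF x (Imp (And (Cond A C) (Cond B C)) (Cond (Or A B) C))].
Proof.
  apply sImpR. apply sAndL.
  apply (sRCond l m 0); [frs|].
  apply (sLCond l m (NV 0) x A C); [ino|ino| |].
  - apply (sLCond l m (NV 0) x B C); [ino|ino| |].
    + apply (kLEx l m (S x) (NV 0) (Or A B)); [ino|frs|].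
      apply (sREx l m (S x) (NV 0) A); [ino|ino|].
      apply (sREx l m (S x) (NV 0) B); [ino|ino|].
      pc (S x) [Or A B] [A; B].
    + apply (sLBar l m 1); [frs|].
      apply (sRBar l m (NV 1) (NV 0) x (Or A B) C); [ino|ino|ino| |].
      * apply (kLEx l m (S x) (NV 1) B); [ino|frs|].
        apply (sREx l m (S x) (NV 1) (Or A B)); [ino|ino|].
        pc (S x) [B] [Or A B].
      * apply (sRAll l m (S x)); [frs|].
        apply (sLAll l m (S x) (NV 1) (Imp B C)); [ino|ino|].
        apply (sLSub l m (S x) (NV 1) (NV 0)); [ino|ino|].
        apply (sREx l m (S x) (NV 0) A); [ino|ino|].
        pc (S x) [Imp B C] [A; Imp (Or A B) C].
  - apply (sLBar l m 1); [frs|].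
    apply (sLCond l m (NV 1) x B C); [ino|ino| |].
    + apply (sRBar l m (NV 1) (NV 0) x (Or A B) C); [ino|ino|ino| |].
      * apply (kLEx l m (S x) (NV 1) A); [ino|frs|].
        apply (sREx l m (S x) (NV 1) (Or A B)); [ino|ino|].
        pc (S x) [A] [Or A B].
      * apply (sRAll l m (S x)); [frs|].
        apply (sLAll l m (S x) (NV 1) (Imp A C)); [ino|ino|].
        apply (sREx l m (S x) (NV 1) B); [ino|ino|].
        pc (S x) [Imp A C] [B; Imp (Or A B) C].
    + apply (sLBar l m 2); [frs|].
      apply (sTr l m (NV 0) (NV 1) (NV 2)); [ino|ino|].
      apply (sRBar l m (NV 2) (NV 0) x (Or A B) C); [ino|ino|ino| |].
      * apply (kLEx l m (S x) (NV 2) B); [ino|frs|].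
        apply (sREx l m (S x) (NV 2) (Or A B)); [ino|ino|].
        pc (S x) [B] [Or A B].
      * apply (sRAll l m (S x)); [frs|].
        apply (sLAll l m (S x) (NV 2) (Imp B C)); [ino|ino|].
        apply (sLSub l m (S x) (NV 2) (NV 1)); [ino|ino|].
        apply (sLAll l m (S x) (NV 1) (Imp A C)); [ino|ino|].
        pc (S x) [Imp A C; Imp B C] [Imp (Or A B) C].
Qed.

Lemma hasT_N l0 : hasT l0 -> hasN l0.
Proof. unfold hasT, hasN; lia. Qed.
Lemma hasW_T l0 : hasW l0 -> hasT l0.
Proof. unfold hasW, hasT; lia. Qed.
Lemma hasC_W l0 : hasC l0 -> hasW l0.
Proof. unfold hasC, hasW; lia. Qed.

Lemma ax_N x : hasN l -> seqS l m [] [LF x (Neg (Cond Top Bot))].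
Proof.
  intro Hl. unfold Neg, Top. apply sImpR.
  apply (sN l m 0 x); [auto|frs|].
  apply (s0 l m (S x) (NV 0) x); [auto|ino|frs|].
  apply (sLCond l m (NV 0) x (Imp Bot Bot) Bot); [ino|ino| |].
  - apply (sREx l m (S x) (NV 0) (Imp Bot Bot)); [ino|ino|].
    pc (S x) (@nil form) [Imp Bot Bot].
  - apply (sLBar l m 1); [frs|].
    apply (kLEx l m (S (S x)) (NV 1) (Imp Bot Bot)); [ino|frs|].
    apply (sLAll l m (S (S x)) (NV 1) (Imp (Imp Bot Bot) Bot)); [ino|ino|].
    pc (S (S x)) [Imp (Imp Bot Bot) Bot] (@nil form).
Qed.

Lemma ax_T A x : hasT l -> seqS l m [] [LF x (Imp A (Neg (Cond A Bot)))].
Proof.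
  intro Hl. unfold Neg. apply sImpR. apply sImpR.
  apply (sT l m 0 x); [auto|frs|].
  apply (sLCond l m (NV 0) x A Bot); [ino|ino| |].
  - apply (sREx l m x (NV 0) A); [ino|ino|]. apply (identity l m A x); ino.
  - apply (sLBar l m 1); [frs|].
    apply (kLEx l m (S x) (NV 1) A); [ino|frs|].
    apply (sLAll l m (S x) (NV 1) (Imp A Bot)); [ino|ino|].
    pc (S x) [A; Imp A Bot] (@nil form).
Qed.

Lemma ax_W A B x : hasW l -> seqS l m [] [LF x (Imp (Cond A B) (Imp A B))].
Proof.
  intro Hl. apply sImpR. apply sImpR.
  apply (sT l m 0 x); [apply hasW_T; auto|frs|].
  apply (sLCond l m (NV 0) x A B); [ino|ino| |].
  - apply (sREx l m x (NV 0) A); [ino|ino|]. apply (identity l m A x); ino.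
  - apply (sLBar l m 1); [frs|].
    apply (sW l m (NV 1) x); [auto|ino|].
    apply (sLAll l m x (NV 1) (Imp A B)); [ino|ino|].
    pc x [A; Imp A B] [B].
Qed.

Lemma repl_gen (Hl : hasC l) B : forall x y G D, In (InW y (NS x)) G ->
  (In (LF x B) G -> In (LF y B) D -> seqS l m G D) /\ (In (LF y B) G -> In (LF x B) D -> seqS l m G D).
Proof.
  induction B as [p| |B1 IH1 B2 IH2|B1 IH1 B2 IH2|B1 IH1 B2 IH2|B1 IH1 B2 IH2]; intros x y G D Hxy; split; intros H1 H2.
  - apply (sRepl1 l m (AProp p) x y); auto. apply (kInit l m y p); simpl; auto.
  - apply (sRepl2 l m (AProp p) x y); auto; [discriminate|]. apply (kInit l m x p); simpl; auto.
  - apply (kBot l m x); auto.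
  - apply (kBot l m y); auto.
  - apply (kAndL l m x B1 B2 G D H1). apply (kAndR l m y B1 B2); auto.
    + use1 IH1 x y.
    + use1 IH2 x y.
  - apply (kAndL l m y B1 B2 G D H1). apply (kAndR l m x B1 B2); auto.
    + use2 IH1 x y.
    + use2 IH2 x y.
  - apply (kOrR l m y B1 B2 G D H2). apply (kOrL l m x B1 B2); auto.
    + use1 IH1 x y.
    + use1 IH2 x y.
  - apply (kOrR l m x B1 B2 G D H2). apply (kOrL l m y B1 B2); auto.
    + use2 IH1 x y.
    + use2 IH2 x y.
  - apply (kImpR l m y B1 B2 G D H2). apply (kImpL l m x B1 B2); [simpl; auto| |].
    + use2 IH1 x y.
    + use1 IH2 x y.
  - apply (kImpR l m x B1 B2 G D H2). apply (kImpL l m y B1 B2); [simpl; auto| |].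
    + use1 IH1 x y.
    + use2 IH2 x y.
  - set (n := freshN (G ++ D)).
    apply (kRCond l m n y B1 B2 G D H2); [apply freshN_ok, incl_refl|].
    apply (sRepl2 l m (AN (NV n)) x y); auto; [discriminate|simpl; auto|simpl; auto|]. simpl.
    apply (sLCond l m (NV n) x B1 B2); [simpl; auto|simpl; auto| |].
    + apply (idEx l m B1 (identity l m B1) (NV n)); simpl; auto.
    + set (j := freshN ((Cnd x (NV n) B1 B2 :: InN (NV n) x :: InN (NV n) y :: Ex (NV n) B1 :: G) ++ Cnd y (NV n) B1 B2 :: D)).
      apply (kLBar l m j x (NV n) B1 B2); [simpl; auto|apply freshN_ok, incl_refl|].
      apply (sRepl1 l m (AN (NV j)) x y); auto; [simpl; auto 10|simpl; auto|]. simpl.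
      apply (sRBar l m (NV j) (NV n) y B1 B2); [simpl; auto|simpl; auto|simpl; auto| |].
      * apply (idEx l m B1 (identity l m B1) (NV j)); simpl; auto 10.
      * apply (idAll l m (Imp B1 B2) (idImp l m B1 B2 (identity l m B1) (identity l m B2)) (NV j)); simpl; auto 10.
  - set (n := freshN (G ++ D)).
    apply (kRCond l m n x B1 B2 G D H2); [apply freshN_ok, incl_refl|].
    apply (sRepl1 l m (AN (NV n)) x y); auto; [simpl; auto|simpl; auto|]. simpl.
    apply (sLCond l m (NV n) y B1 B2); [simpl; auto|simpl; auto| |].
    + apply (idEx l m B1 (identity l m B1) (NV n)); simpl; auto.
    + set (j := freshN ((Cnd y (NV n) B1 B2 :: InN (NV n) y :: InN (NV n) x :: Ex (NV n) B1 :: G) ++ Cnd x (NV n) B1 B2 :: D)).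
      apply (kLBar l m j y (NV n) B1 B2); [simpl; auto|apply freshN_ok, incl_refl|].
      apply (sRepl2 l m (AN (NV j)) x y); auto; [discriminate|simpl; auto 10|simpl; auto|]. simpl.
      apply (sRBar l m (NV j) (NV n) x B1 B2); [simpl; auto|simpl; auto|simpl; auto| |].
      * apply (idEx l m B1 (identity l m B1) (NV j)); simpl; auto 10.
      * apply (idAll l m (Imp B1 B2) (idImp l m B1 B2 (identity l m B1) (identity l m B2)) (NV j)); simpl; auto 10.
Qed.

Lemma ax_C A B x : hasC l -> seqS l m [] [LF x (Imp (And A B) (Cond A B))].
Proof.
  intro Hl. apply sImpR. apply sAndL.
  apply (sRCond l m 0); [frs|].
  apply (sC l m (NV 0) x); [auto|ino|].
  apply (sSingle l m x); [auto|ino|].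
  apply (sRBar l m (NS x) (NV 0) x A B); [ino|ino|ino| |].
  - apply (sREx l m x (NS x) A); [ino|ino|]. apply (identity l m A x); ino.
  - apply (sRAll l m (S x)); [frs|]. apply sImpR.
    match goal with |- seqS _ _ ?G ?D => apply (proj1 (repl_gen Hl B x (S x) G D ltac:(ino))); ino end.
Qed.

Lemma ax_U1 A x : m = MU -> seqS l m [] [LF x (Imp (Cond (Neg A) Bot) (Cond (Neg (Cond (Neg A) Bot)) Bot))].
Proof.
  intro Hm. unfold Neg. apply sImpR.
  apply (sRCond l m 0); [frs|].
  apply (kLEx l m (S x) (NV 0) (Imp (Cond (Imp A Bot) Bot) Bot)); [ino|frs|].
  apply (kImpL l m (S x) (Cond (Imp A Bot) Bot) Bot); [ino| |apply (kBot l m (S x)); ino].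
  apply (kRCond l m 1 (S x) (Imp A Bot) Bot); [ino|frs|].
  apply (kLEx l m (S (S x)) (NV 1) (Imp A Bot)); [ino|frs|].
  apply (sU1 l m 2 (NV 0) (NV 1) x (S x) (S (S x))); [auto|ino|ino|ino|ino|frs|].
  apply (sLCond l m (NV 2) x (Imp A Bot) Bot); [ino|ino| |].
  - apply (sREx l m (S (S x)) (NV 2) (Imp A Bot)); [ino|ino|]. apply (identity l m (Imp A Bot) (S (S x))); ino.
  - apply (sLBar l m 3); [frs|].
    apply (kLEx l m (S (S (S x))) (NV 3) (Imp A Bot)); [ino|frs|].
    apply (sLAll l m (S (S (S x))) (NV 3) (Imp (Imp A Bot) Bot)); [ino|ino|].
    pc (S (S (S x))) [Imp A Bot; Imp (Imp A Bot) Bot] (@nil form).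
Qed.

Lemma ax_U2 A x : m = MU -> seqS l m [] [LF x (Imp (Neg (Cond A Bot)) (Cond (Cond A Bot) Bot))].
Proof.
  intro Hm. unfold Neg. apply sImpR.
  apply (kImpL l m x (Cond A Bot) Bot); [ino| |apply (kBot l m x); ino].
  apply (kRCond l m 0 x (Cond A Bot) Bot); [ino|frs|].
  apply (kLEx l m (S x) (NV 0) (Cond A Bot)); [ino|frs|].
  apply (kRCond l m 1 x A Bot); [ino|frs|].
  apply (kLEx l m (S (S x)) (NV 1) A); [ino|frs|].
  apply (sU2 l m 2 (NV 0) (NV 1) x (S x) (S (S x))); [auto|ino|ino|ino|ino|frs|].
  apply (sLCond l m (NV 2) (S x) A Bot); [ino|ino| |].
  - apply (sREx l m (S (S x)) (NV 2) A); [ino|ino|]. apply (identity l m A (S (S x))); ino.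
  - apply (sLBar l m 3); [frs|].
    apply (kLEx l m (S (S (S x))) (NV 3) A); [ino|frs|].
    apply (sLAll l m (S (S (S x))) (NV 3) (Imp A Bot)); [ino|ino|].
    pc (S (S (S x))) [A; Imp A Bot] (@nil form).
Qed.

Lemma ax_A1 A B C x : m = MA -> seqS l m [] [LF x (Imp (Cond A B) (Cond C (Cond A B)))].
Proof.
  intro Hm. apply sImpR.
  apply (sRCond l m 0); [frs|].
  apply (sRef l m (NV 0)).
  apply (sRBar l m (NV 0) (NV 0) x C (Cond A B)); [ino|ino|ino| |].
  - apply (idEx l m C (identity l m C) (NV 0)); ino.
  - apply (sRAll l m (S x)); [frs|]. apply sImpR.
    apply (sRCond l m 1); [frs|].
    apply (sA2 l m (NV 0) (NV 1) x (S x)); [auto|ino|ino|ino|].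
    apply (sLCond l m (NV 1) x A B); [ino|ino| |].
    + apply (idEx l m A (identity l m A) (NV 1)); ino.
    + apply (sLBar l m 2); [frs|].
      apply (sA1 l m (NV 0) (NV 2) x (S x)); [auto|ino|ino|ino|].
      apply (sRBar l m (NV 2) (NV 1) (S x) A B); [ino|ino|ino| |].
      * apply (idEx l m A (identity l m A) (NV 2)); ino.
      * apply (idAll l m (Imp A B) (idImp l m A B (identity l m A) (identity l m B)) (NV 2)); ino.
Qed.

Lemma ax_A2 A B C x : m = MA -> seqS l m [] [LF x (Imp (Neg (Cond A B)) (Cond C (Neg (Cond A B))))].
Proof.
  intro Hm. unfold Neg. apply sImpR.
  apply (kImpL l m x (Cond A B) Bot); [ino| |apply (kBot l m x); ino].
  apply (kRCond l m 0 x C (Imp (Cond A B) Bot)); [ino|frs|].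
  apply (sRef l m (NV 0)).
  apply (sRBar l m (NV 0) (NV 0) x C (Imp (Cond A B) Bot)); [ino|ino|ino| |].
  - apply (idEx l m C (identity l m C) (NV 0)); ino.
  - apply (sRAll l m (S x)); [frs|]. apply sImpR. apply sImpR.
    apply (kRCond l m 1 x A B); [ino|frs|].
    apply (sA1 l m (NV 0) (NV 1) x (S x)); [auto|ino|ino|ino|].
    apply (sLCond l m (NV 1) (S x) A B); [ino|ino| |].
    + apply (idEx l m A (identity l m A) (NV 1)); ino.
    + apply (sLBar l m 2); [frs|].
      apply (sA2 l m (NV 0) (NV 2) x (S x)); [auto|ino|ino|ino|].
      apply (sRBar l m (NV 2) (NV 1) x A B); [ino|ino|ino| |].
      * apply (idEx l m A (identity l m A) (NV 2)); ino.
      * apply (idAll l m (Imp A B) (idImp l m A B (identity l m A) (identity l m B)) (NV 2)); ino.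
Qed.

End Ax.

Section H.
Variables (l : level) (m : modext).

Definition Ent (A B : form) := forall y G D, In (LF y A) G -> In (LF y B) D -> seqS l m G D.

Lemma ent_of_imp A B : (forall y, seqS l m [] [LF y (Imp A B)]) -> Ent A B.
Proof.
  intros H y G D H1 H2. pose proof (invImpR l m _ _ _ _ _ (H y)) as H3.
  apply (closure l m _ _ _ _ H3); intros z Hz; simpl in Hz; destruct Hz as [<-|[]]; auto.
Qed.

Lemma rcea_half A B C x : Ent A B -> Ent B A -> seqS l m [] [LF x (Imp (Cond A C) (Cond B C))].
Proof.
  intros AB BA. apply sImpR.
  apply (sRCond l m 0); [frs|].
  apply (sLCond l m (NV 0) x A C); [ino|ino| |].
  - apply (kLEx l m (S x) (NV 0) B); [ino|frs|].
    apply (sREx l m (S x) (NV 0) A); [ino|ino|].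
    apply (BA (S x)); ino.
  - apply (sLBar l m 1); [frs|].
    apply (sRBar l m (NV 1) (NV 0) x B C); [ino|ino|ino| |].
    + apply (kLEx l m (S x) (NV 1) A); [ino|frs|].
      apply (sREx l m (S x) (NV 1) B); [ino|ino|].
      apply (AB (S x)); ino.
    + apply (sRAll l m (S x)); [frs|].
      apply (sLAll l m (S x) (NV 1) (Imp A C)); [ino|ino|].
      apply (kImpR l m (S x) B C); [ino|].
      apply (kImpL l m (S x) A C); [ino| |].
      * apply (BA (S x)); ino.
      * apply (identity l m C (S x)); ino.
Qed.

Lemma rcea A B C x : (forall y, seqS l m [] [LF y (Iff A B)]) -> seqS l m [] [LF x (Iff (Cond A C) (Cond B C))].
Proof.
  intro H. unfold Iff in *.
  assert (AB : Ent A B) by (apply ent_of_imp; intro y; exact (invAndR1 l m _ _ _ _ _ (H y))).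
  assert (BA : Ent B A) by (apply ent_of_imp; intro y; exact (invAndR2 l m _ _ _ _ _ (H y))).
  apply sAndR; apply rcea_half; auto.
Qed.

Lemma rck A B C x : (forall y, seqS l m [] [LF y (Imp A B)]) -> seqS l m [] [LF x (Imp (Cond C A) (Cond C B))].
Proof.
  intro H. assert (AB : Ent A B) by (apply ent_of_imp; auto).
  apply sImpR.
  apply (sRCond l m 0); [frs|].
  apply (sLCond l m (NV 0) x C A); [ino|ino| |].
  - apply (idEx l m C (identity l m C) (NV 0)); ino.
  - apply (sLBar l m 1); [frs|].
    apply (sRBar l m (NV 1) (NV 0) x C B); [ino|ino|ino| |].
    + apply (idEx l m C (identity l m C) (NV 1)); ino.
    + apply (sRAll l m (S x)); [frs|].
      apply (sLAll l m (S x) (NV 1) (Imp C A)); [ino|ino|].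
      apply (kImpR l m (S x) C B); [ino|].
      apply (kImpL l m (S x) C A); [ino| |].
      * apply (identity l m C (S x)); ino.
      * apply (AB (S x)); ino.
Qed.

Lemma mp A B x : seqS l m [] [LF x (Imp A B)] -> seqS l m [] [LF x A] -> seqS l m [] [LF x B].
Proof.
  intros H1 H2. pose proof (invImpR l m _ _ _ _ _ H1) as H3.
  apply (cut l m (LF x A)).
  - apply (wk l m _ _ _ _ [] [LF x B] H2); simpl; auto.
  - exact H3.
Qed.

Theorem hilbert_seqS A : hilbert l m A -> forall x, seqS l m [] [LF x A].
Proof.
  induction 1; intro x.
  - apply taut_der; auto.
  - eapply mp; eauto.
  - apply rcea; auto.
  - apply rck; auto.
  - apply ax_ID.
  - apply ax_RAnd.
  - apply ax_CM.
  - apply ax_OR.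
  - apply ax_N; auto.
  - apply ax_T; auto.
  - apply ax_W; auto.
  - apply ax_C; auto.
  - apply ax_U1; auto.
  - apply ax_U2; auto.
  - apply ax_A1; auto.
  - apply ax_A2; auto.
Qed.
End H.

Definition isNA (F : lform) : bool := match F with InN _ _ | InW _ _ | Sub _ _ => false | _ => true end.
Definition SSrel (G G' : list lform) := (forall F, In F G <-> In F G') /\ Permutation (filter isNA G) (filter isNA G').

Lemma Permutation_filter (f : lform -> bool) l1 l2 : Permutation l1 l2 -> Permutation (filter f l1) (filter f l2).
Proof.
  induction 1; simpl; auto.
  - destruct (f x); auto.
  - destruct (f x), (f y); auto. apply perm_swap.
  - eapply Permutation_trans; eauto.
Qed.

Lemma SSrel_refl G : SSrel G G.
Proof. split; [tauto|apply Permutation_refl]. Qed.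
Lemma SSrel_perm_l G1 G2 G' : Permutation G1 G2 -> SSrel G2 G' -> SSrel G1 G'.
Proof.
  intros HP [H1 H2]. split.
  - intro F. rewrite <- H1. split; apply Permutation_in; auto. apply Permutation_sym; auto.
  - eapply Permutation_trans; [|exact H2]. apply Permutation_filter; auto.
Qed.
Lemma SSrel_cons F G G' : SSrel G G' -> SSrel (F :: G) (F :: G').
Proof.
  intros [H1 H2]. split.
  - intro F0. simpl. rewrite H1. tauto.
  - simpl. destruct (isNA F); auto.
Qed.
Lemma SSrel_app L G G' : SSrel G G' -> SSrel (L ++ G) (L ++ G').
Proof. induction L; simpl; auto using SSrel_cons. Qed.
Lemma SSrel_dup A G G' : SSrel G G' -> In A G -> isNA A = false -> SSrel (A :: G) G'.
Proof.
  intros [H1 H2] HA HNA. split.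
  - intro F. simpl. rewrite <- H1. intuition (subst; auto).
  - simpl. rewrite HNA. auto.
Qed.
Lemma SSrel_extract P G0 G' : SSrel (P :: G0) G' -> isNA P = true ->
  exists G'', Permutation G' (P :: G'') /\ SSrel G0 G''.
Proof.
  intros [H1 H2] HNA.
  assert (HP : In P G') by (apply H1; left; auto).
  destruct (perm_in_split P G' HP) as [G'' HG''].
  exists G''. split; auto.
  assert (Hf : Permutation (filter isNA G0) (filter isNA G'')).
  { simpl in H2. rewrite HNA in H2. apply (Permutation_cons_inv (a := P)).
    eapply Permutation_trans; [exact H2|]. apply (Permutation_filter isNA) in HG''. simpl in HG''. rewrite HNA in HG''. auto. }
  split; auto.
  intro F. destruct (isNA F) eqn:EF.
  - split; intro HF.
    + assert (In F (filter isNA G'')). { eapply Permutation_in; [exact Hf|]. apply filter_In; auto. }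
      apply filter_In in H; tauto.
    + assert (In F (filter isNA G0)). { eapply Permutation_in; [apply Permutation_sym, Hf|]. apply filter_In; auto. }
      apply filter_In in H; tauto.
  - assert (F <> P) by (intro; subst; congruence).
    split; intro HF.
    + assert (In F G') by (apply H1; right; auto). apply (Permutation_in _ HG'') in H0. destruct H0; [congruence|auto].
    + assert (In F G') by (eapply Permutation_in; [apply Permutation_sym, HG''|right; auto]).
      apply H1 in H0. destruct H0; [congruence|auto].
Qed.

Lemma extract_nodup (NL G : list lform) : NoDup NL -> incl NL G -> exists R, Permutation G (NL ++ R).
Proof.
  revert G. induction NL as [|a NL IH]; intros G HN HI.
  - exists G. simpl; apply Permutation_refl.
  - inversion HN; subst.
    destruct (perm_in_split a G (HI a (or_introl eq_refl))) as [G1 HG1].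
    destruct (IH G1) as [R HR]; auto.
    + intros z Hz. assert (In z G) by (apply HI; right; auto).
      apply (Permutation_in _ HG1) in H. destruct H; auto. subst. contradiction.
    + exists R. simpl. eapply Permutation_trans; [exact HG1|]. apply perm_skip; auto.
Qed.

Lemma occ_w_wlF x F : occ_w x F <-> In x (wlF F).
Proof. destruct F; repeat match goal with a : nlab |- _ => destruct a end; simpl; intuition. Qed.
Lemma occ_n_nlF x F : occ_n x F <-> In x (nlF F).
Proof. destruct F; repeat match goal with a : nlab |- _ => destruct a end; simpl; intuition (try congruence; subst; auto).
  all: try (inversion H; auto); try (inversion H0; auto); try (inversion H1; auto). Qed.

Lemma fresh_w_of y L L0 : ~ In y (wls L0) -> incl L L0 -> fresh_w y L.
Proof. intros H1 H2 F HF Hocc. apply H1. apply in_wls. exists F. split; [apply H2; auto|apply occ_w_wlF; auto]. Qed.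
Lemma fresh_n_of y L L0 : ~ In y (nls L0) -> incl L L0 -> fresh_n y L.
Proof. intros H1 H2 F HF Hocc. apply H1. apply in_nls. exists F. split; [apply H2; auto|apply occ_n_nlF; auto]. Qed.

Lemma seqder_perm l m G D G' D' : seqder l m G D -> Permutation G G' -> Permutation D D' -> seqder l m G' D'.
Proof. intros; eapply S_perm; eauto. Qed.

Lemma invL_isNA P : isInvL P -> isNA P = true.
Proof. destruct P; simpl; tauto. Qed.
Lemma invR_isNA P : isInvR P -> isNA P = true.
Proof. destruct P; simpl; tauto. Qed.

Ltac nodup := repeat constructor; simpl; intuition discriminate.
Ltac incl_GD := let F := fresh "F" in let HF := fresh "HF" in
  intros F HF; simpl in HF; repeat rewrite in_app_iff in *; simpl in *; intuition (subst; eauto).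

Theorem toder l m G D : seqS l m G D -> forall G', SSrel G G' -> seqder l m G' D.
Proof.
  induction 1 as [Lc Rc NL NR Ps ew en G0 D0 G D Hr HG HD HNL HNR Hew Hen Hp IH].
  intros G' HS.
  assert (HS0 : SSrel (Lc ++ G0) G') by (eapply SSrel_perm_l; [apply Permutation_sym, HG|exact HS]).
  assert (HG'G : forall F, In F G' -> In F G) by (intros F HF; apply (proj1 HS); auto).
  assert (HGG' : forall F, In F G -> In F G') by (intros F HF; apply (proj1 HS); auto).
  assert (HG0G : forall F, In F G0 -> In F G) by (intros F HF; eapply perm_sub; [exact HG|]; apply in_or_app; auto).
  assert (HD0D : forall F, In F D0 -> In F D) by (intros F HF; eapply perm_sub; [exact HD|]; apply in_or_app; auto).
  assert (HRcD : forall F, In F Rc -> In F D) by (intros F HF; eapply perm_sub; [exact HD|]; apply in_or_app; auto).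
  assert (HNLG' : incl NL G') by (intros F HF; apply HGG', HG0G, HNL; auto).
  assert (HNLG : forall F, In F NL -> In F G) by (intros F HF; apply HG0G, HNL; auto).
  destruct Hr.
  - destruct (SSrel_extract _ _ _ HS0 eq_refl) as [G'' [HP HS'']].
    eapply seqder_perm; [apply (S_init l m x p G'' D0)|apply Permutation_sym; auto|apply Permutation_sym; auto].
  - destruct (SSrel_extract _ _ _ HS0 eq_refl) as [G'' [HP HS'']].
    eapply seqder_perm; [apply (S_botL l m x G'' D0)|apply Permutation_sym; auto|apply Permutation_sym; auto].
  - destruct (SSrel_extract _ _ _ HS0 (invL_isNA P H)) as [G'' [HP HS'']].
    assert (HRG : forall F, In F G'' -> In F G') by (intros F HF; eapply perm_sub; [exact HP|right; auto]).
    assert (HPG : In P G') by (eapply perm_sub; [exact HP|left; auto]).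
    eapply seqder_perm; [|apply Permutation_sym, HP|apply Permutation_sym, HD]. simpl.
    destruct P as [a0 x0|x0 a0|a0 b0|x0 f|a0 A|a0 A|x0 a0 A B]; simpl in H; try contradiction;
      [destruct f as [p| |A B|A B|A B|A B]; simpl in H; try contradiction| |].
    + apply S_andL. apply (IH [LF x0 A; LF x0 B] []); [left; auto|simpl; repeat apply SSrel_cons; auto].
    + apply S_orL; [apply (IH [LF x0 A] [])|apply (IH [LF x0 B] [])]; simpl; auto; apply SSrel_cons; auto.
    + apply S_impL; [apply (IH [] [LF x0 A])|apply (IH [LF x0 B] [])]; simpl; auto; apply SSrel_cons; auto.
    + apply (S_LEx l m y a0 A).
      * eapply fresh_w_of; [apply (Hew y eq_refl)|]. incl_GD.
      * apply (IH [InW y a0; LF y A] []); [left; auto|simpl; repeat apply SSrel_cons; auto].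
    + apply (S_LBar l m k a0 x0 A B).
      * eapply fresh_n_of; [apply (Hen k eq_refl)|]. incl_GD.
      * apply (IH [InN (NV k) x0; Sub (NV k) a0; Ex (NV k) A; All (NV k) (Imp A B)] []); [left; auto|simpl; repeat apply SSrel_cons; auto].
  - simpl in HS0.
    eapply seqder_perm; [|apply Permutation_refl|apply Permutation_sym, HD]. simpl.
    destruct P as [a0 x0|x0 a0|a0 b0|x0 f|a0 A|a0 A|x0 a0 A B]; simpl in H; try contradiction;
      [destruct f as [p| |A B|A B|A B|A B]; simpl in H; try contradiction|].
    + apply S_andR; [apply (IH [] [LF x0 A])|apply (IH [] [LF x0 B])]; simpl; auto.
    + apply S_orR. apply (IH [] [LF x0 A; LF x0 B]); simpl; auto.
    + apply S_impR. apply (IH [LF x0 A] [LF x0 B]); simpl; auto. apply SSrel_cons; auto.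
    + apply (S_RCond l m k x0 A B).
      * eapply fresh_n_of; [apply (Hen k eq_refl)|]. incl_GD.
      * apply (IH [InN (NV k) x0; Ex (NV k) A] [Cnd x0 (NV k) A B]); [left; auto|simpl; repeat apply SSrel_cons; auto].
    + apply (S_RAll l m y a0 A).
      * eapply fresh_w_of; [apply (Hew y eq_refl)|]. incl_GD.
      * apply (IH [InW y a0] [LF y A]); [left; auto|simpl; repeat apply SSrel_cons; auto].
  -
    simpl in HS0. destruct (extract_nodup [InW x a; All a A] G' ltac:(nodup) HNLG') as [R HR].
    eapply seqder_perm; [|apply Permutation_sym, HR|apply Permutation_sym, HD]. simpl.
    apply S_LAll. eapply seqder_perm; [apply (IH [LF x A] []); [left; auto|apply SSrel_cons; exact HS0]|eapply Permutation_trans; [apply perm_skip, HR|perm]|apply Permutation_refl].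
  -
    simpl in HS0. destruct (extract_nodup [InW x a] G' ltac:(nodup) HNLG') as [R HR].
    destruct (perm_in_split (Ex a A) D0 (HNR _ (or_introl eq_refl))) as [D1 HD1].
    eapply seqder_perm; [|apply Permutation_sym, HR|eapply Permutation_trans; [apply Permutation_sym, HD1|apply Permutation_sym, HD]]. simpl.
    apply S_REx. eapply seqder_perm; [apply (IH [] [LF x A]); [left; auto|exact HS0]|exact HR|apply perm_skip, HD1].
  -
    simpl in HS0. destruct (extract_nodup [InN a x; LF x (Cond A B)] G' ltac:(nodup) HNLG') as [R HR].
    eapply seqder_perm; [|apply Permutation_sym, HR|apply Permutation_sym, HD]. simpl.
    apply S_LCond.
    + eapply seqder_perm; [apply (IH [] [Ex a A]); [left; auto|exact HS0]|exact HR|apply Permutation_refl].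
    + eapply seqder_perm; [apply (IH [Cnd x a A B] []); [right; left; auto|apply SSrel_cons; exact HS0]|eapply Permutation_trans; [apply perm_skip, HR|perm]|apply Permutation_refl].
  -
    simpl in HS0. destruct (extract_nodup [InN c x; Sub c a] G' ltac:(nodup) HNLG') as [R HR].
    destruct (perm_in_split (Cnd x a A B) D0 (HNR _ (or_introl eq_refl))) as [D1 HD1].
    eapply seqder_perm; [|apply Permutation_sym, HR|eapply Permutation_trans; [apply Permutation_sym, HD1|apply Permutation_sym, HD]]. simpl.
    apply S_RBar.
    + eapply seqder_perm; [apply (IH [] [Ex c A]); [left; auto|exact HS0]|exact HR|]. simpl. eapply Permutation_trans; [apply perm_skip, HD1|apply perm_swap].
    + eapply seqder_perm; [apply (IH [] [All c (Imp A B)]); [right; left; auto|exact HS0]|exact HR|]. simpl. eapply Permutation_trans; [apply perm_skip, HD1|apply perm_swap].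
  -
    simpl in HS0. eapply seqder_perm; [|apply Permutation_refl|apply Permutation_sym, HD]. simpl.
    apply (S_Ref l m a). apply (IH [Sub a a] []); [left; auto|apply SSrel_cons; auto].
  -
    simpl in HS0. eapply seqder_perm; [|apply Permutation_refl|apply Permutation_sym, HD]. simpl.
    destruct (lform_eq_dec (Sub c b) (Sub b a)) as [E|NE].
    + inversion E; subst. apply (IH [Sub a a] []); [left; auto|]. simpl.
      apply SSrel_dup; auto. apply HNL; left; auto.
    + destruct (extract_nodup [Sub c b; Sub b a] G' ltac:(repeat constructor; simpl; intuition) HNLG') as [R HR].
      eapply seqder_perm; [|apply Permutation_sym, HR|apply Permutation_refl]. simpl.
      apply S_Tr. eapply seqder_perm; [apply (IH [Sub c a] []); [left; auto|apply SSrel_cons; exact HS0]|eapply Permutation_trans; [apply perm_skip, HR|perm]|apply Permutation_refl].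
  -
    simpl in HS0. destruct (extract_nodup [InW x a; Sub a b] G' ltac:(nodup) HNLG') as [R HR].
    eapply seqder_perm; [|apply Permutation_sym, HR|apply Permutation_sym, HD]. simpl.
    apply S_LSub. eapply seqder_perm; [apply (IH [InW x b] []); [left; auto|apply SSrel_cons; exact HS0]|eapply Permutation_trans; [apply perm_skip, HR|perm]|apply Permutation_refl].
  -
    simpl in HS0. eapply seqder_perm; [|apply Permutation_refl|apply Permutation_sym, HD]. simpl.
    apply (S_N l m n x); auto.
    + eapply fresh_n_of; [apply (Hen n eq_refl)|]. incl_GD.
    + apply (IH [InN (NV n) x] []); [left; auto|apply SSrel_cons; auto].
  -
    simpl in HS0. destruct (extract_nodup [InN a x] G' ltac:(nodup) HNLG') as [R HR].
    assert (HRG : forall F, In F R -> In F G') by (intros F HF; eapply perm_sub; [exact HR|right; auto]).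
    eapply seqder_perm; [|apply Permutation_sym, HR|apply Permutation_sym, HD]. simpl.
    apply (S_0 l m y a x); auto.
    + eapply fresh_w_of; [apply (Hew y eq_refl)|]. incl_GD.
    + eapply seqder_perm; [apply (IH [InW y a] []); [left; auto|apply SSrel_cons; exact HS0]|eapply Permutation_trans; [apply perm_skip, HR|perm]|apply Permutation_refl].
  -
    simpl in HS0. eapply seqder_perm; [|apply Permutation_refl|apply Permutation_sym, HD]. simpl.
    apply (S_T l m n x); auto.
    + eapply fresh_n_of; [apply (Hen n eq_refl)|]. incl_GD.
    + apply (IH [InW x (NV n); InN (NV n) x] []); [left; auto|simpl; repeat apply SSrel_cons; auto].
  -
    simpl in HS0. destruct (extract_nodup [InN a x] G' ltac:(nodup) HNLG') as [R HR].
    eapply seqder_perm; [|apply Permutation_sym, HR|apply Permutation_sym, HD]. simpl.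
    apply (S_W l m a x); auto.
    eapply seqder_perm; [apply (IH [InW x a] []); [left; auto|apply SSrel_cons; exact HS0]|eapply Permutation_trans; [apply perm_skip, HR|perm]|apply Permutation_refl].
  -
    simpl in HS0. destruct (extract_nodup [InN (NS x) x] G' ltac:(nodup) HNLG') as [R HR].
    eapply seqder_perm; [|apply Permutation_sym, HR|apply Permutation_sym, HD]. simpl.
    apply (S_Single l m x); auto.
    eapply seqder_perm; [apply (IH [InW x (NS x)] []); [left; auto|apply SSrel_cons; exact HS0]|eapply Permutation_trans; [apply perm_skip, HR|perm]|apply Permutation_refl].
  -
    simpl in HS0. destruct (extract_nodup [InN a x] G' ltac:(nodup) HNLG') as [R HR].
    eapply seqder_perm; [|apply Permutation_sym, HR|apply Permutation_sym, HD]. simpl.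
    apply (S_C l m a x); auto.
    eapply seqder_perm; [apply (IH [InN (NS x) x; Sub (NS x) a] []); [left; auto|simpl; repeat apply SSrel_cons; exact HS0]|
      apply perm_skip, perm_skip, HR|apply Permutation_refl].
  -
    simpl in HS0. eapply seqder_perm; [|apply Permutation_refl|apply Permutation_sym, HD]. simpl.
    destruct (lform_eq_dec (InW y (NS x)) (instAt t x)) as [E|NE].
    + assert (Exy : x = y /\ instAt t y = instAt t x).
      { destruct t; simpl in E; inversion E; subst; auto. }
      destruct Exy as [-> Ei]. apply (IH [instAt t y] []); [left; auto|]. simpl.
      apply SSrel_dup; auto.
      * apply HNL; right; left; auto.
      * rewrite <- E. reflexivity.
    + destruct (extract_nodup [InW y (NS x); instAt t x] G' ltac:(repeat constructor; simpl; intuition) HNLG') as [R HR].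
      eapply seqder_perm; [|apply Permutation_sym, HR|apply Permutation_refl]. simpl.
      apply (S_Repl1 l m t x y); auto.
      eapply seqder_perm; [apply (IH [instAt t y] []); [left; auto|apply SSrel_cons; exact HS0]|eapply Permutation_trans; [apply perm_skip, HR|perm]|apply Permutation_refl].
  -
    simpl in HS0. destruct (extract_nodup [InW y (NS x); instAt t y] G' ltac:(repeat constructor; simpl; intuition) HNLG') as [R HR].
    eapply seqder_perm; [|apply Permutation_sym, HR|apply Permutation_sym, HD]. simpl.
    apply (S_Repl2 l m t x y); auto.
    eapply seqder_perm; [apply (IH [instAt t x] []); [left; auto|apply SSrel_cons; exact HS0]|eapply Permutation_trans; [apply perm_skip, HR|perm]|apply Permutation_refl].
  -
    simpl in HS0. eapply seqder_perm; [|apply Permutation_refl|apply Permutation_sym, HD].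
    apply (S_U1 l m n a b x y z); auto.
    + eapply fresh_n_of; [apply (Hen n eq_refl)|]. incl_GD.
    + apply (IH [InW z (NV n); InN (NV n) x] []); [left; auto|simpl; repeat apply SSrel_cons; auto].
  -
    simpl in HS0. eapply seqder_perm; [|apply Permutation_refl|apply Permutation_sym, HD].
    apply (S_U2 l m n a b x y z); auto.
    + eapply fresh_n_of; [apply (Hen n eq_refl)|]. incl_GD.
    + apply (IH [InW z (NV n); InN (NV n) y] []); [left; auto|simpl; repeat apply SSrel_cons; auto].
  -
    simpl in HS0. eapply seqder_perm; [|apply Permutation_refl|apply Permutation_sym, HD].
    apply (S_A1 l m a b x y); auto.
    apply (IH [InN b y] []); [left; auto|apply SSrel_cons; auto].
  -
    simpl in HS0. eapply seqder_perm; [|apply Permutation_refl|apply Permutation_sym, HD]. simpl.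
    destruct (lform_eq_dec (InN a x) (InN b y)) as [E|NE].
    + inversion E; subst. apply (IH [InN b y] []); [left; auto|]. simpl.
      apply SSrel_dup; auto. apply HNL; left; auto.
    + assert (ND : NoDup [InN a x; InW y a; InN b y]).
      { constructor; [simpl; intros [Hc|[Hc|[]]]; [discriminate|apply NE; symmetry; exact Hc]|].
        constructor; [simpl; intros [Hc|[]]; discriminate|]. constructor; [simpl; tauto|constructor]. }
      destruct (extract_nodup [InN a x; InW y a; InN b y] G' ND HNLG') as [R HR].
      eapply seqder_perm; [|apply Permutation_sym, HR|apply Permutation_refl]. simpl.
      apply (S_A2 l m a b x y); auto.
      eapply seqder_perm; [apply (IH [InN b x] []); [left; auto|apply SSrel_cons; exact HS0]|eapply Permutation_trans; [apply perm_skip, HR|perm]|apply Permutation_refl].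
Qed.

Theorem mainTheorem13 :
  forall (l : level) (m : modext) (A : form),
    hilbert l m A -> forall x : wlab, seqder l m [] [LF x A].
Proof.
  intros l m A H x.
  apply (toder l m [] [LF x A] (hilbert_seqS l m A H x) [] (SSrel_refl [])).
Qed.
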